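(* Let $f(x,y)=\tfrac12(x^2+y^2)$ and let $p_1,\dots,p_n\in Q$ be pairwise distinct with $M_{W_i}>0$. Then the performance function $$\mathcal H(p_1,\dots,p_n)=\int_Q\min_{(a,b)\in C}\tfrac12\big(\|q-p_a\|^2+\|q-p_b\|^2\big)\phi(q)\,dq$$ satisfies $$\frac{\partial\mathcal H}{\partial p_i}=-\sum_{\mathcal T_{ij}\in\mathcal P_i}M_{V_{\mathcal T_{ij}}}\big(C_{V_{\mathcal T_{ij}}}-p_i\big)=-M_{W_i}\,(C_{W_i}-p_i).$$
   Context: $Q\subset\mathbb{R}^2$ is a compact convex polygon, $\phi:Q\to[0,\infty)$ a $C^2$ density, $n\ge3$, $C=\{(a,b):1\le a<b\le n\}$. For $i\neq j$, $V_{\mathcal T_{ij}}=\{q\in Q:\|q-p_v\|\le\|q-p_w\|\ \forall v\in\{i,j\},\ w\notin\{i,j\}\}$ is the order-2 Voronoi cell generated by $\{p_i,p_j\}$; $\mathcal P_i$ is the collection of all such cells' generating pairs containing $i$. Mass and centroid: $M_{V}=\int_V\phi(q)dq$, $C_V=\frac{1}{M_V}\int_V q\phi(q)dq$. $W_i=\bigcup_{\mathcal T_{ij}\in\mathcal P_i}V_{\mathcal T_{ij}}$, $M_{W_i}=\sum_{\mathcal T_{ij}\in\mathcal P_i}M_{V_{\mathcal T_{ij}}}$, $C_{W_i}=\frac{1}{M_{W_i}}\sum_{\mathcal T_{ij}\in\mathcal P_i}M_{V_{\mathcal T_{ij}}}C_{V_{\mathcal T_{ij}}}$. *)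

(* Defs.v *)
From Stdlib Require Import Reals Lra List ClassicalEpsilon.
Open Scope R_scope.

Definition pt := (R * R)%type.
Definition vadd (u v : pt) : pt := (fst u + fst v, snd u + snd v).
Definition vsub (u v : pt) : pt := (fst u - fst v, snd u - snd v).
Definition vscal (c : R) (u : pt) : pt := (c * fst u, c * snd u).
Definition vopp (u : pt) : pt := vscal (-1) u.
Definition vnorm (u : pt) : R := sqrt (fst u ^ 2 + snd u ^ 2).

Definition sumR (l : list nat) (F : nat -> R) : R :=
  fold_right (fun j acc => F j + acc) 0 l.
Definition sumV (l : list nat) (F : nat -> pt) : pt :=
  fold_right (fun j acc => vadd (F j) acc) (0, 0) l.

Fixpoint lincomb (w : list R) (vs : list pt) : pt :=
  match w, vs with
  | c :: w', v :: vs' => vadd (vscal c v) (lincomb w' vs')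
  | _, _ => (0, 0)
  end.
Definition in_hull (vs : list pt) (q : pt) : Prop :=
  exists w : list R, length w = length vs /\ Forall (fun c => 0 <= c) w /\
    fold_right Rplus 0 w = 1 /\ q = lincomb w vs.
Definition is_convex_polygon (Q : pt -> Prop) : Prop :=
  exists vs : list pt, (forall q, Q q <-> in_hull vs q) /\
    exists q0 r, 0 < r /\ forall q, vnorm (vsub q q0) < r -> Q q.

Definition continuous2 (g : pt -> R) : Prop :=
  forall q eps, 0 < eps -> exists del, 0 < del /\
    forall q', vnorm (vsub q' q) < del -> Rabs (g q' - g q) < eps.
Definition C1_2 (g : pt -> R) : Prop :=
  exists gx gy : pt -> R,
    (forall x y, derivable_pt_lim (fun t => g (t, y)) x (gx (x, y))) /\
    (forall x y, derivable_pt_lim (fun t => g (x, t)) y (gy (x, y))) /\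
    continuous2 g /\ continuous2 gx /\ continuous2 gy.
Definition C2_2 (g : pt -> R) : Prop :=
  exists gx gy : pt -> R,
    (forall x y, derivable_pt_lim (fun t => g (t, y)) x (gx (x, y))) /\
    (forall x y, derivable_pt_lim (fun t => g (x, t)) y (gy (x, y))) /\
    continuous2 g /\ C1_2 gx /\ C1_2 gy.

(* Integral over R^2 of a compactly supported function, as iterated
   Riemann integral over a box containing the support. *)
Definition Int2 (g : pt -> R) (I : R) : Prop :=
  exists a b c d, a <= b /\ c <= d /\
    (forall x y, ~ (a <= x <= b /\ c <= y <= d) -> g (x, y) = 0) /\
    exists F : R -> R,
      (forall x, a <= x <= b ->
         exists pr : Riemann_integrable (fun y => g (x, y)) c d,
           RiemannInt pr = F x) /\
      exists pr : Riemann_integrable F a b, RiemannInt pr = I.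
Definition integral2 (g : pt -> R) : R :=
  epsilon (inhabits 0) (fun I => Int2 g I).

Definition ind (S : pt -> Prop) (q : pt) : R :=
  if excluded_middle_informative (S q) then 1 else 0.

(* integral over a set S (used only for S ⊆ Q, compact) *)
Definition integral_on (S : pt -> Prop) (g : pt -> R) : R :=
  integral2 (fun q => ind S q * g q).

(* Indices 0..n-1 (the paper's 1..n). *)
Definition V2 (Q : pt -> Prop) (n : nat) (p : nat -> pt) (i j : nat) (q : pt) : Prop :=
  Q q /\ forall v w, (v = i \/ v = j) -> (w < n)%nat -> w <> i -> w <> j ->
    vnorm (vsub q (p v)) <= vnorm (vsub q (p w)).

Definition mass (Q : pt -> Prop) (phi : pt -> R) (n : nat) (p : nat -> pt) (i j : nat) : R :=
  integral_on (V2 Q n p i j) phi.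
Definition centroid (Q : pt -> Prop) (phi : pt -> R) (n : nat) (p : nat -> pt) (i j : nat) : pt :=
  vscal (/ mass Q phi n p i j)
    (integral_on (V2 Q n p i j) (fun q => fst q * phi q),
     integral_on (V2 Q n p i j) (fun q => snd q * phi q)).

(* The pairs {i,j} in P_i, indexed by j ∈ {0..n-1} \ {i}. *)
Definition others (n i : nat) : list nat := filter (fun j => negb (Nat.eqb j i)) (seq 0 n).

Definition massW (Q : pt -> Prop) (phi : pt -> R) (n : nat) (p : nat -> pt) (i : nat) : R :=
  sumR (others n i) (fun j => mass Q phi n p i j).
Definition centroidW (Q : pt -> Prop) (phi : pt -> R) (n : nat) (p : nat -> pt) (i : nat) : pt :=
  vscal (/ massW Q phi n p i)
    (sumV (others n i) (fun j => vscal (mass Q phi n p i j) (centroid Q phi n p i j))).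

Definition f (x y : R) : R := / 2 * (x ^ 2 + y ^ 2).

Definition pairsC (n : nat) : list (nat * nat) :=
  flat_map (fun b => map (fun a => (a, b)) (seq 0 b)) (seq 0 n).

(* min over (a,b) in C of f(||q-p_a||, ||q-p_b||); the pair (0,1) ∈ C when n >= 2 *)
Definition minC (n : nat) (p : nat -> pt) (q : pt) : R :=
  fold_right (fun ab acc => Rmin (f (vnorm (vsub q (p (fst ab)))) (vnorm (vsub q (p (snd ab))))) acc)
    (f (vnorm (vsub q (p 0%nat))) (vnorm (vsub q (p 1%nat)))) (pairsC n).

Definition H (Q : pt -> Prop) (phi : pt -> R) (n : nat) (p : nat -> pt) : R :=
  integral_on Q (fun q => minC n p q * phi q).

Definition upd (p : nat -> pt) (i : nat) (v : pt) : nat -> pt :=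
  fun k => if Nat.eqb k i then v else p k.

(* Main.v *)
From Coquelicot Require Import Coquelicot.
From Stdlib Require Import Reals Lra Lia List ClassicalEpsilon FunctionalExtensionality.
Require Import Defs.
Open Scope R_scope.

Definition Int2b (a b c d : R) (g : pt -> R) (I : R) : Prop :=
  a <= b /\ c <= d /\ (forall x y, ~ (a <= x <= b /\ c <= y <= d) -> g (x,y) = 0) /\
  (forall x, a <= x <= b -> ex_RInt (fun y => g (x,y)) c d) /\
  ex_RInt (fun x => RInt (fun y => g (x,y)) c d) a b /\
  RInt (fun x => RInt (fun y => g (x,y)) c d) a b = I.

Lemma Int2b_Int2 a b c d g I : Int2b a b c d g I -> Int2 g I.
Proof.
  intros (Hab & Hcd & Hs & Hi & Ho & HI).
  exists a, b, c, d. split; [exact Hab|]. split; [exact Hcd|]. split; [exact Hs|].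
  exists (fun x => RInt (fun y => g (x,y)) c d). split.
  - intros x Hx. exists (ex_RInt_Reals_0 _ _ _ (Hi x Hx)).
    symmetry; apply RInt_Reals.
  - exists (ex_RInt_Reals_0 _ _ _ Ho). rewrite <- RInt_Reals. exact HI.
Qed.

Lemma Int2_Int2b g I : Int2 g I -> exists a b c d, Int2b a b c d g I.
Proof.
  intros (a & b & c & d & Hab & Hcd & Hs & F & HF & pr & Hpr).
  exists a, b, c, d. split; [exact Hab|]. split; [exact Hcd|]. split; [exact Hs|].
  assert (HF' : forall x, a <= x <= b -> ex_RInt (fun y => g (x,y)) c d /\
     RInt (fun y => g (x,y)) c d = F x).
  { intros x Hx. destruct (HF x Hx) as [prx Hx']. split.
    - apply ex_RInt_Reals_1; exact prx.
    - rewrite (RInt_Reals _ _ _ prx). exact Hx'. }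
  split; [intros x Hx; apply (HF' x Hx)|].
  assert (E : forall x, Rmin a b < x < Rmax a b -> F x = RInt (fun y => g (x,y)) c d).
  { intros x Hx. rewrite Rmin_left in Hx by lra. rewrite Rmax_right in Hx by lra.
    symmetry; apply HF'; lra. }
  split.
  - apply ex_RInt_ext with F; [exact E|]. apply ex_RInt_Reals_1; exact pr.
  - rewrite <- (RInt_ext F) by exact E. rewrite (RInt_Reals _ _ _ pr). exact Hpr.
Qed.

Lemma RInt_zero_ext (h : R -> R) a b : (forall x, Rmin a b < x < Rmax a b -> h x = 0) ->
  ex_RInt h a b /\ RInt h a b = 0.
Proof.
  intros Hz. split.
  - apply ex_RInt_ext with (fun _ => 0). intros; symmetry; auto. apply ex_RInt_const.
  - rewrite (RInt_ext h (fun _ => 0)) by auto. rewrite RInt_const. 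
    unfold scal; simpl; unfold mult; simpl. ring.
Qed.

Lemma RInt_extend (h : R -> R) a b a' b' : a' <= a -> a <= b -> b <= b' ->
  (forall x, x < a -> h x = 0) -> (forall x, b < x -> h x = 0) ->
  ex_RInt h a b -> ex_RInt h a' b' /\ RInt h a' b' = RInt h a b.
Proof.
  intros H1 H2 H3 Hl Hr He.
  assert (Z1 : ex_RInt h a' a /\ RInt h a' a = 0).
  { apply RInt_zero_ext. intros x Hx. rewrite Rmax_right in Hx by lra. apply Hl; lra. }
  assert (Z2 : ex_RInt h b b' /\ RInt h b b' = 0).
  { apply RInt_zero_ext. intros x Hx. rewrite Rmin_left in Hx by lra. apply Hr; lra. }
  destruct Z1 as [E1 V1]; destruct Z2 as [E2 V2'].
  assert (E3 : ex_RInt h a' b) by (apply ex_RInt_Chasles with a; auto).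
  split.
  - apply ex_RInt_Chasles with b; auto.
  - rewrite <- (RInt_Chasles h a' b b') by auto. rewrite <- (RInt_Chasles h a' a b) by auto.
    rewrite V1, V2'. unfold plus; simpl. ring.
Qed.

Lemma Int2b_extend a b c d a' b' c' d' g I : a' <= a -> b <= b' -> c' <= c -> d <= d' ->
  Int2b a b c d g I -> Int2b a' b' c' d' g I.
Proof.
  intros Ha Hb Hc Hd (Hab & Hcd & Hs & Hi & Ho & HI).
  assert (Hin : forall x, a' <= x <= b' -> ex_RInt (fun y => g (x,y)) c' d' /\
     RInt (fun y => g (x,y)) c' d' = (if Rle_dec a x then if Rle_dec x b then
        RInt (fun y => g (x,y)) c d else 0 else 0)).
  { intros x Hx. destruct (Rle_dec a x) as [h1|h1]; [destruct (Rle_dec x b) as [h2|h2]|].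
    - apply RInt_extend; try lra.
      + intros y Hy; apply Hs; lra.
      + intros y Hy; apply Hs; lra.
      + apply Hi; lra.
    - apply RInt_zero_ext. intros y _. apply Hs. lra.
    - apply RInt_zero_ext. intros y _. apply Hs. lra. }
  split; [lra|]. split; [lra|]. split.
  { intros x y Hn. apply Hs. lra. }
  split; [intros x Hx; apply (Hin x Hx)|].
  set (F := fun x => if Rle_dec a x then if Rle_dec x b then RInt (fun y => g (x,y)) c d else 0 else 0).
  assert (EF : forall x, Rmin a' b' < x < Rmax a' b' -> F x = RInt (fun y => g (x,y)) c' d').
  { intros x Hx. rewrite Rmin_left in Hx by lra. rewrite Rmax_right in Hx by lra.
    symmetry; apply Hin; lra. }
  assert (EF2 : forall x, Rmin a b < x < Rmax a b -> RInt (fun y => g (x,y)) c d = F x).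
  { intros x Hx. rewrite Rmin_left in Hx by lra. rewrite Rmax_right in Hx by lra.
    unfold F. destruct (Rle_dec a x); [|lra]. destruct (Rle_dec x b); [reflexivity|lra]. }
  assert (HF : ex_RInt F a' b' /\ RInt F a' b' = RInt F a b).
  { apply RInt_extend; try lra.
    - intros x Hx; unfold F; destruct (Rle_dec a x); [lra|reflexivity].
    - intros x Hx; unfold F; destruct (Rle_dec a x); [|reflexivity].
      destruct (Rle_dec x b); [lra|reflexivity].
    - apply ex_RInt_ext with (1 := EF2). exact Ho. }
  destruct HF as [HF1 HF2].
  split.
  - apply ex_RInt_ext with (1 := EF). exact HF1.
  - rewrite <- (RInt_ext _ _ _ _ EF). rewrite HF2. rewrite <- (RInt_ext _ _ _ _ EF2). exact HI.
Qed.

Lemma Int2b_same a b c d g I1 I2 : Int2b a b c d g I1 -> Int2b a b c d g I2 -> I1 = I2.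
Proof. intros H1 H2. destruct H1 as (_&_&_&_&_&<-). destruct H2 as (_&_&_&_&_&<-). reflexivity. Qed.

Lemma Int2b_unique a b c d a' b' c' d' g I1 I2 :
  Int2b a b c d g I1 -> Int2b a' b' c' d' g I2 -> I1 = I2.
Proof.
  intros H1 H2.
  assert (Hab : a <= b) by apply H1. assert (Hcd : c <= d) by apply H1.
  assert (Hab' : a' <= b') by apply H2. assert (Hcd' : c' <= d') by apply H2.
  apply (Int2b_same (Rmin a a') (Rmax b b') (Rmin c c') (Rmax d d') g).
  - eapply Int2b_extend; [ | | | | exact H1]; 
      first [apply Rmin_l | apply Rmax_l | apply Rmin_l | apply Rmax_l].
  - eapply Int2b_extend; [ | | | | exact H2];
      first [apply Rmin_r | apply Rmax_r].
Qed.

Lemma integral2_Int2b a b c d g I : Int2b a b c d g I -> integral2 g = I.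
Proof.
  intros H. unfold integral2.
  assert (Ex : exists I, Int2 g I) by (exists I; eapply Int2b_Int2; eauto).
  pose proof (epsilon_spec (inhabits 0) (fun I => Int2 g I) Ex) as Hs.
  destruct (Int2_Int2b _ _ Hs) as (a' & b' & c' & d' & H').
  eapply Int2b_unique; eauto.
Qed.

Lemma Int2b_lin a b c d g1 g2 I1 I2 l : Int2b a b c d g1 I1 -> Int2b a b c d g2 I2 ->
  Int2b a b c d (fun q => g1 q + l * g2 q) (I1 + l * I2).
Proof.
  intros (Hab & Hcd & Hs1 & Hi1 & Ho1 & HI1) (_ & _ & Hs2 & Hi2 & Ho2 & HI2).
  assert (Hin : forall x, a <= x <= b -> ex_RInt (fun y => g1 (x,y) + l * g2 (x,y)) c d /\
     RInt (fun y => g1 (x,y) + l * g2 (x,y)) c d =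
     RInt (fun y => g1 (x,y)) c d + l * RInt (fun y => g2 (x,y)) c d).
  { intros x Hx. split.
    - apply (ex_RInt_plus (fun y => g1 (x,y)) (fun y => l * g2 (x,y))).
      apply Hi1; auto. apply (ex_RInt_scal (fun y => g2 (x,y))). apply Hi2; auto.
    - rewrite (RInt_plus (fun y => g1 (x,y)) (fun y => l * g2 (x,y))).
      + rewrite (RInt_scal (fun y => g2 (x,y))). reflexivity. apply Hi2; auto.
      + apply Hi1; auto.
      + apply (ex_RInt_scal (fun y => g2 (x,y))). apply Hi2; auto. }
  assert (E : forall x, Rmin a b < x < Rmax a b ->
     RInt (fun y => g1 (x,y)) c d + l * RInt (fun y => g2 (x,y)) c d =
     RInt (fun y => g1 (x,y) + l * g2 (x,y)) c d).
  { intros x Hx. rewrite Rmin_left in Hx by lra. rewrite Rmax_right in Hx by lra.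
    symmetry; apply Hin; lra. }
  assert (Ex : ex_RInt (fun x => RInt (fun y => g1 (x,y)) c d + l * RInt (fun y => g2 (x,y)) c d) a b).
  { apply (ex_RInt_plus (fun x => RInt (fun y => g1 (x,y)) c d)); [exact Ho1|].
    apply (ex_RInt_scal (fun x => RInt (fun y => g2 (x,y)) c d)); exact Ho2. }
  split; [exact Hab|]. split; [exact Hcd|]. split.
  { intros x y Hn. rewrite Hs1, Hs2 by exact Hn. ring. }
  split; [intros x Hx; apply (Hin x Hx)|].
  split.
  - apply ex_RInt_ext with (1 := E). exact Ex.
  - rewrite <- (RInt_ext _ _ _ _ E).
    rewrite (RInt_plus (fun x => RInt (fun y => g1 (x,y)) c d)
             (fun x => l * RInt (fun y => g2 (x,y)) c d)); [| exact Ho1 |].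
    + rewrite (RInt_scal (fun x => RInt (fun y => g2 (x,y)) c d)) by exact Ho2.
      rewrite HI1, HI2. reflexivity.
    + apply (ex_RInt_scal (fun x => RInt (fun y => g2 (x,y)) c d)); exact Ho2.
Qed.

Lemma Int2b_le a b c d g1 g2 I1 I2 : Int2b a b c d g1 I1 -> Int2b a b c d g2 I2 ->
  (forall q, g1 q <= g2 q) -> I1 <= I2.
Proof.
  intros (Hab & Hcd & Hs1 & Hi1 & Ho1 & HI1) (_ & _ & Hs2 & Hi2 & Ho2 & HI2) Hle.
  rewrite <- HI1, <- HI2. apply RInt_le; auto.
  intros x Hx. apply RInt_le; auto; try (apply Hi1; lra); try (apply Hi2; lra).
Qed.

Lemma Int2b_ext a b c d g1 g2 I : (forall q, g1 q = g2 q) -> Int2b a b c d g1 I -> Int2b a b c d g2 I.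
Proof.
  intros E H. replace g2 with g1; auto. apply functional_extensionality; auto.
Qed.

Lemma Int2b_zero a b c d : a <= b -> c <= d -> Int2b a b c d (fun _ => 0) 0.
Proof.
  intros Hab Hcd. split; [auto|]. split; [auto|]. split; [auto|].
  split; [intros; apply ex_RInt_const|].
  assert (E : RInt (fun _ : R => 0) c d = 0).
  { intros; rewrite RInt_const; unfold scal; simpl; unfold mult; simpl; ring. }
  split.
  - apply ex_RInt_ext with (fun _ => 0). intros; rewrite E; auto. apply ex_RInt_const.
  - rewrite (RInt_ext _ (fun _ => 0)).
    + rewrite RInt_const; unfold scal; simpl; unfold mult; simpl; ring.
    + intros; exact E.
Qed.

Definition ind1 (s t x : R) : R := if Rle_dec s x then if Rle_dec x t then 1 else 0 else 0.

Ltac dec_all := repeat match goal with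
  | |- context [Rle_dec ?x ?y] => destruct (Rle_dec x y)
  | H : context [Rle_dec ?x ?y] |- _ => destruct (Rle_dec x y)
  end.

Lemma RInt_const0 a b (v : R) : RInt (fun _ => v) a b = v * (b - a).
Proof. rewrite RInt_const. unfold scal; simpl; unfold mult; simpl. ring. Qed.

Lemma ind1_int a b s t : a <= b -> s <= t ->
  ex_RInt (ind1 s t) a b /\ 0 <= RInt (ind1 s t) a b <= t - s.
Proof.
  intros Hab Hst.
  set (u := Rmax a (Rmin s b)). set (v := Rmax u (Rmin t b)).
  assert (Hu1 : a <= u) by apply Rmax_l. assert (Hv1 : u <= v) by apply Rmax_l.
  assert (Hv2 : v <= b).
  { unfold v, u. unfold Rmax, Rmin; dec_all; lra. }
  assert (E1 : forall x, Rmin a u < x < Rmax a u -> ind1 s t x = 0).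
  { intros x Hx. rewrite Rmin_left in Hx by lra. rewrite Rmax_right in Hx by lra.
    unfold u in *. unfold ind1, Rmax, Rmin in *; dec_all; lra. }
  assert (E2 : forall x, Rmin u v < x < Rmax u v -> ind1 s t x = 1).
  { intros x Hx. rewrite Rmin_left in Hx by lra. rewrite Rmax_right in Hx by lra.
    unfold v, u in *. unfold ind1, Rmax, Rmin in *; dec_all; lra. }
  assert (E3 : forall x, Rmin v b < x < Rmax v b -> ind1 s t x = 0).
  { intros x Hx. rewrite Rmin_left in Hx by lra. rewrite Rmax_right in Hx by lra.
    unfold v, u in *. unfold ind1, Rmax, Rmin in *; dec_all; lra. }
  assert (X1 : ex_RInt (ind1 s t) a u).
  { apply ex_RInt_ext with (fun _ => 0). intros; symmetry; auto. apply ex_RInt_const. }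
  assert (X2 : ex_RInt (ind1 s t) u v).
  { apply ex_RInt_ext with (fun _ => 1). intros; symmetry; auto. apply ex_RInt_const. }
  assert (X3 : ex_RInt (ind1 s t) v b).
  { apply ex_RInt_ext with (fun _ => 0). intros; symmetry; auto. apply ex_RInt_const. }
  assert (X12 : ex_RInt (ind1 s t) a v) by (apply ex_RInt_Chasles with u; auto).
  split. apply ex_RInt_Chasles with v; auto.
  rewrite <- (RInt_Chasles _ a v b) by auto. rewrite <- (RInt_Chasles _ a u v) by auto.
  rewrite (RInt_ext _ _ a u E1), (RInt_ext _ _ u v E2), (RInt_ext _ _ v b E3).
  rewrite !RInt_const0. unfold plus; simpl.
  assert (v - u <= t - s). { unfold v, u. unfold Rmax, Rmin; dec_all; lra. }
  nra.
Qed.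

Lemma cut_int (G : R -> R) a b s t : a <= s -> s <= t -> t <= b -> ex_RInt G s t ->
  ex_RInt (fun x => if Rle_dec s x then if Rle_dec x t then G x else 0 else 0) a b /\
  RInt (fun x => if Rle_dec s x then if Rle_dec x t then G x else 0 else 0) a b = RInt G s t.
Proof.
  intros H1 H2 H3 HG.
  set (F := fun x => if Rle_dec s x then if Rle_dec x t then G x else 0 else 0).
  assert (E1 : forall x, Rmin a s < x < Rmax a s -> F x = 0).
  { intros x Hx. rewrite Rmin_left in Hx by lra. rewrite Rmax_right in Hx by lra.
    unfold F; dec_all; lra. }
  assert (E2 : forall x, Rmin s t < x < Rmax s t -> G x = F x).
  { intros x Hx. rewrite Rmin_left in Hx by lra. rewrite Rmax_right in Hx by lra.
    unfold F; dec_all; lra. }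
  assert (E3 : forall x, Rmin t b < x < Rmax t b -> F x = 0).
  { intros x Hx. rewrite Rmin_left in Hx by lra. rewrite Rmax_right in Hx by lra.
    unfold F; dec_all; lra. }
  assert (X1 : ex_RInt F a s).
  { apply ex_RInt_ext with (fun _ => 0). intros; symmetry; auto. apply ex_RInt_const. }
  assert (X2 : ex_RInt F s t) by (apply ex_RInt_ext with G; auto).
  assert (X3 : ex_RInt F t b).
  { apply ex_RInt_ext with (fun _ => 0). intros; symmetry; auto. apply ex_RInt_const. }
  assert (X12 : ex_RInt F a t) by (apply ex_RInt_Chasles with s; auto).
  split. apply ex_RInt_Chasles with t; auto.
  rewrite <- (RInt_Chasles _ a t b) by auto. rewrite <- (RInt_Chasles _ a s t) by auto.
  change (plus (plus (RInt F a s) (RInt F s t)) (RInt F t b) = RInt G s t).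
  rewrite (RInt_ext _ _ a s E1), (RInt_ext _ _ t b E3), <- (RInt_ext _ _ s t E2).
  rewrite !RInt_const0. unfold plus; simpl. ring.
Qed.

Definition SF0 (a b : R) : StepFun a b := mkStepFun (StepFun_P4 a b 0).

Lemma SF_pr_aux a b (phi : StepFun a b) (eps : posreal) :
  (forall t, Rmin a b <= t <= Rmax a b -> Rabs (phi t - phi t) <= SF0 a b t) /\ Rabs (RiemannInt_SF (SF0 a b)) < eps.
Proof.
  split.
  - intros t _. unfold SF0; simpl. unfold fct_cte. rewrite Rminus_diag, Rabs_R0. lra.
  - unfold SF0. rewrite StepFun_P18. rewrite Rmult_0_l, Rabs_R0. apply cond_pos.
Qed.

Definition SF_pr a b (phi : StepFun a b) : Riemann_integrable phi a b :=
  fun eps => existT _ phi (exist _ (SF0 a b) (SF_pr_aux a b phi eps)).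

Lemma SF_Rint a b (phi : StepFun a b) : a <= b -> ex_RInt phi a b /\ RInt phi a b = RiemannInt_SF phi.
Proof.
  intros Hab.
  split. apply ex_RInt_Reals_1; exact (SF_pr a b phi).
  rewrite (RInt_Reals _ _ _ (SF_pr a b phi)).
  unfold RiemannInt. destruct (RiemannInt_exists (SF_pr a b phi) RinvN RinvN_cv) as [l Hl].
  simpl in Hl. apply UL_sequence with (1 := Hl).
  intros e He. exists 0%nat. intros. unfold R_dist. rewrite Rminus_diag, Rabs_R0. exact He.
Qed.

Lemma SF_nonneg a b (psi : StepFun a b) : a <= b -> (forall x, a < x < b -> 0 <= psi x) ->
  0 <= RiemannInt_SF psi.
Proof.
  intros Hab H. replace 0 with (RiemannInt_SF (SF0 a b)).
  apply StepFun_P37; auto. intros; unfold SF0; simpl; unfold fct_cte; auto.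
  unfold SF0. apply (eq_trans (StepFun_P18 a b 0)). ring.
Qed.

Lemma approx_int (f : R -> R) a b : a <= b ->
  (forall eps, 0 < eps -> exists g k : R -> R, ex_RInt g a b /\ ex_RInt k a b /\
     (forall t, a <= t <= b -> Rabs (f t - g t) <= k t) /\ RInt k a b < eps) ->
  ex_RInt f a b.
Proof.
  intros Hab Happ. apply ex_RInt_Reals_1. intro eps.
  assert (He4 : 0 < eps / 4) by (generalize (cond_pos eps); lra).
  destruct (constructive_indefinite_description _ (Happ (eps/4) He4)) as [g Hg].
  destruct (constructive_indefinite_description _ Hg) as [k (Hg1 & Hk1 & Hfk & Hk)].
  pose (e4 := mkposreal _ He4).
  destruct (ex_RInt_Reals_0 _ _ _ Hg1 e4) as [phig [psig [Hg2 Hg3]]].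
  destruct (ex_RInt_Reals_0 _ _ _ Hk1 e4) as [phik [psik [Hk2 Hk3]]].
  rewrite Rmin_left in Hg2, Hk2 by lra. rewrite Rmax_right in Hg2, Hk2 by lra.
  exists phig.
  exists (mkStepFun (StepFun_P28 1 phik (mkStepFun (StepFun_P28 1 psik psig)))).
  split.
  - intros t Ht. rewrite Rmin_left in Ht by lra. rewrite Rmax_right in Ht by lra. simpl.
    specialize (Hfk t Ht). specialize (Hg2 t Ht). specialize (Hk2 t Ht).
    apply Rabs_le_between in Hk2.
    assert (Rabs (f t - phig t) <= Rabs (f t - g t) + Rabs (g t - phig t)).
    { replace (f t - phig t) with ((f t - g t) + (g t - phig t)) by ring. apply Rabs_triang. }
    lra.
  - rewrite StepFun_P30. simpl. rewrite StepFun_P30.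
    destruct (SF_Rint a b phik Hab) as [X1 V1].
    destruct (SF_Rint a b psik Hab) as [X2 V2].
    assert (Hle : RInt phik a b <= RInt (fun x => k x + psik x) a b).
    { apply RInt_le; auto. apply (ex_RInt_plus k psik); auto.
      intros x Hx. specialize (Hk2 x ltac:(lra)). apply Rabs_le_between in Hk2. lra. }
    rewrite (RInt_plus k psik) in Hle by auto. unfold plus in Hle; simpl in Hle.
    rewrite V1, V2 in Hle.
    apply Rabs_def2 in Hg3. apply Rabs_def2 in Hk3. simpl in Hg3, Hk3.
    assert (0 <= RiemannInt_SF phik + 1 * (RiemannInt_SF psik + 1 * RiemannInt_SF psig)).
    { rewrite <- StepFun_P30 with (f := psik) (g := psig).
      rewrite <- StepFun_P30.
      apply SF_nonneg; auto. intros x Hx. simpl.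
      specialize (Hfk x ltac:(lra)). specialize (Hg2 x ltac:(lra)). specialize (Hk2 x ltac:(lra)).
      apply Rabs_le_between in Hk2. generalize (Rabs_pos (g x - phig x)) (Rabs_pos (f x - g x)). lra. }
    apply Rabs_def1; lra.
Qed.

Definition lub (E : R -> Prop) : R := epsilon (inhabits 0) (is_lub E).

Lemma lub_spec E B : (exists y, E y) -> (forall y, E y -> y <= B) -> is_lub E (lub E).
Proof.
  intros Hne Hb. unfold lub. apply epsilon_spec.
  destruct (completeness E) as [m Hm]; [exists B; exact Hb | exact Hne | exists m; exact Hm].
Qed.

Lemma lub_approx E m eps : is_lub E m -> 0 < eps -> exists y, E y /\ m - eps < y.
Proof.
  intros [Hu Hl] He. apply NNPP. intro Hn.
  assert (is_upper_bound E (m - eps)).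
  { intros y Hy. apply Rnot_lt_le. intro Hc. apply Hn. exists y; auto. }
  specialize (Hl _ H). lra.
Qed.

Lemma concave_lip (u : R -> R) x1 x2 m M eta : 0 < eta ->
  (forall x y l, x1 <= x <= x2 -> x1 <= y <= x2 -> 0 <= l <= 1 ->
     l * u x + (1-l) * u y <= u (l*x + (1-l)*y)) ->
  (forall x, x1 <= x <= x2 -> m <= u x <= M) ->
  forall x y, x1 + eta <= x <= x2 - eta -> x1 + eta <= y <= x2 - eta ->
  Rabs (u x - u y) <= (M - m) / eta * Rabs (x - y).
Proof.
  intros Heta Hc Hb.
  assert (Key : forall x y, x1 + eta <= x <= x2 - eta -> x1 + eta <= y <= x2 - eta -> x < y ->
     Rabs (u x - u y) <= (M - m) / eta * Rabs (x - y)).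
  { intros x y Hx Hy Hxy.
    set (l := (x2 - y) / (x2 - x)).
    assert (Hl : 0 <= l <= 1).
    { unfold l; split. apply Rdiv_le_0_compat; lra.
      apply Rmult_le_reg_r with (x2 - x); [lra|]. unfold Rdiv. rewrite Rmult_assoc, Rinv_l by lra. lra. }
    assert (Ey : l * x + (1 - l) * x2 = y) by (unfold l; field; lra).
    pose proof (Hc x x2 l ltac:(lra) ltac:(lra) Hl) as C1. rewrite Ey in C1.
    assert (H1l : 1 - l = (y - x) / (x2 - x)) by (unfold l; field; lra).
    assert (H1l' : (y - x) / (x2 - x) <= (y - x) / eta).
    { unfold Rdiv. apply Rmult_le_compat_l; [lra|]. apply Rinv_le_contravar; lra. }
    pose proof (Hb x ltac:(lra)). pose proof (Hb x2 ltac:(lra)). pose proof (Hb y ltac:(lra)).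
    pose proof (Hb x1 ltac:(lra)).
    assert (Low : u x - u y <= (M - m) * ((y - x) / eta)).
    { assert (u x - u y <= (1 - l) * (u x - u x2)) by lra.
      assert ((1 - l) * (u x - u x2) <= (1-l) * (M - m)) by (apply Rmult_le_compat_l; lra).
      rewrite H1l in *. 
      assert ((y - x) / (x2 - x) * (M - m) <= (y - x) / eta * (M - m)) by (apply Rmult_le_compat_r; lra).
      lra. }
    set (mu := (y - x) / (y - x1)).
    assert (Hmu : 0 <= mu <= 1).
    { unfold mu; split. apply Rdiv_le_0_compat; lra.
      apply Rmult_le_reg_r with (y - x1); [lra|]. unfold Rdiv. rewrite Rmult_assoc, Rinv_l by lra. lra. }
    assert (Ex : mu * x1 + (1 - mu) * y = x) by (unfold mu; field; lra).
    pose proof (Hc x1 y mu ltac:(lra) ltac:(lra) Hmu) as C2. rewrite Ex in C2.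
    assert (Hmu' : mu <= (y - x) / eta).
    { unfold mu, Rdiv. apply Rmult_le_compat_l; [lra|]. apply Rinv_le_contravar; lra. }
    assert (Up : u y - u x <= (M - m) * ((y - x) / eta)).
    { assert (u y - u x <= mu * (u y - u x1)) by lra.
      assert (mu * (u y - u x1) <= mu * (M - m)) by (apply Rmult_le_compat_l; lra).
      assert (mu * (M - m) <= (y - x) / eta * (M - m)) by (apply Rmult_le_compat_r; lra).
      lra. }
    rewrite (Rabs_left (x - y)) by lra.
    replace (- (x - y)) with (y - x) by ring.
    replace ((M - m) / eta * (y - x)) with ((M - m) * ((y - x) / eta)) by (field; lra).
    apply Rabs_le. split; lra. }
  intros x y Hx Hy. destruct (Rtotal_order x y) as [Hlt|[Heq|Hgt]].
  - apply Key; auto.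
  - subst. rewrite !Rminus_diag, Rabs_R0. lra.
  - rewrite Rabs_minus_sym, (Rabs_minus_sym x). apply Key; auto.
Qed.

Lemma cont_eps (g : R -> R) z : (forall eps, 0 < eps -> exists del, 0 < del /\
   forall x, Rabs (x - z) < del -> Rabs (g x - g z) < eps) -> continuous g z.
Proof.
  intros H. apply continuity_pt_filterlim. intros eps He.
  destruct (H eps He) as [del [Hd Hx]]. exists del. split; auto.
  intros x [_ Hx']. apply Hx. exact Hx'.
Qed.

Lemma cont2_1d (g : R -> R -> R) x y : continuity_2d_pt g x y -> continuous (fun v => g x v) y.
Proof.
  intros Hc. apply cont_eps. intros eps He.
  destruct (Hc (mkposreal _ He)) as [del Hd]. exists del. split. apply cond_pos.
  intros v Hv. apply Hd. rewrite Rminus_diag, Rabs_R0. apply cond_pos. exact Hv.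
Qed.

Lemma cont_bound (g : R -> R -> R) a b c d : (forall x y, continuity_2d_pt g x y) ->
  exists M, 0 <= M /\ forall x y, a <= x <= b -> c <= y <= d -> Rabs (g x y) <= M.
Proof.
  intros Hc.
  destruct (Rle_dec a b) as [Hab|Hab]; [|exists 0; split; [lra|]; intros; lra].
  destruct (Rle_dec c d) as [Hcd|Hcd]; [|exists 0; split; [lra|]; intros; lra].
  destruct (uniform_continuity_2d g a b c d (fun x y _ _ => Hc x y) (mkposreal 1 Rlt_0_1)) as [del Hd].
  simpl in Hd. set (dl := pos del). assert (Hdl : 0 < dl) by apply cond_pos.
  assert (Ind : forall N : nat, forall x y, a <= x <= b -> c <= y <= d ->
     x <= a + INR N * (dl / 2) -> y <= c + INR N * (dl / 2) -> Rabs (g x y) <= Rabs (g a c) + INR N).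
  { induction N as [|N IH]; intros x y Hx Hy Hx2 Hy2.
    - simpl in *. replace x with a by lra. replace y with c by lra. lra.
    - rewrite S_INR in *. pose proof (pos_INR N). rewrite Rmult_plus_distr_r in Hx2, Hy2. assert (0 <= INR N * (dl/2)) by (apply Rmult_le_pos; lra).
      set (x' := Rmax a (x - dl/2)). set (y' := Rmax c (y - dl/2)).
      assert (Hx' : a <= x' <= b /\ x' <= a + INR N * (dl/2) /\ Rabs (x - x') < dl).
      { unfold x', Rmax; destruct (Rle_dec a (x - dl/2)); split; try split; try apply Rabs_def1; lra. }
      assert (Hy' : c <= y' <= d /\ y' <= c + INR N * (dl/2) /\ Rabs (y - y') < dl).
      { unfold y', Rmax; destruct (Rle_dec c (y - dl/2)); split; try split; try apply Rabs_def1; lra. }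
      destruct Hx' as (A1 & A2 & A3). destruct Hy' as (B1 & B2 & B3).
      specialize (IH x' y' A1 B1 A2 B2).
      specialize (Hd x' y' x y A1 B1 Hx Hy A3 B3).
      assert (Rabs (g x y) <= Rabs (g x' y') + Rabs (g x y - g x' y')).
      { replace (g x y) with (g x' y' + (g x y - g x' y')) at 1 by ring. apply Rabs_triang. }
      lra. }
  destruct (INR_unbounded ((b - a + (d - c)) / (dl / 2))) as [N HN].
  exists (Rabs (g a c) + INR N). split. generalize (Rabs_pos (g a c)) (pos_INR N); lra.
  intros x y Hx Hy. apply Ind; auto.
  - assert ((b - a + (d - c)) <= INR N * (dl / 2)).
    { apply Rmult_le_reg_r with (/ (dl/2)). apply Rinv_0_lt_compat; lra.
      rewrite Rmult_assoc, Rinv_r by lra. unfold Rdiv in HN. lra. }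
    lra.
  - assert ((b - a + (d - c)) <= INR N * (dl / 2)).
    { apply Rmult_le_reg_r with (/ (dl/2)). apply Rinv_0_lt_compat; lra.
      rewrite Rmult_assoc, Rinv_r by lra. unfold Rdiv in HN. lra. }
    lra.
Qed.

Lemma RInt_abs_bound (g : R -> R) s t M : ex_RInt g s t ->
  (forall x, Rmin s t <= x <= Rmax s t -> Rabs (g x) <= M) -> Rabs (RInt g s t) <= M * Rabs (t - s).
Proof.
  intros He Hb. destruct (Rle_dec s t) as [Hst|Hst].
  - rewrite Rmin_left, Rmax_right in Hb by lra. rewrite (Rabs_right (t - s)) by lra.
    rewrite Rmult_comm. apply abs_RInt_le_const; auto.
  - rewrite Rmin_right, Rmax_left in Hb by lra. rewrite (Rabs_left (t - s)) by lra.
    rewrite <- (opp_RInt_swap g t s) by (apply ex_RInt_swap; auto). unfold opp; simpl. rewrite Rabs_Ropp.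
    replace (- (t - s)) with (s - t) by ring. rewrite Rmult_comm.
    apply abs_RInt_le_const; [lra | apply ex_RInt_swap; auto | auto].
Qed.

Definition convexS (S : pt -> Prop) : Prop := forall x1 y1 x2 y2 l,
  S (x1,y1) -> S (x2,y2) -> 0 <= l <= 1 -> S (l*x1 + (1-l)*x2, l*y1 + (1-l)*y2).
Definition refl (S : pt -> Prop) : pt -> Prop := fun q => S (fst q, - snd q).
Definition up (S : pt -> Prop) (x : R) : R := lub (fun y => S (x,y)).
Definition lo (S : pt -> Prop) (x : R) : R := - up (refl S) x.
Definition Pr (S : pt -> Prop) (x : R) : Prop := exists y, S (x,y).

Lemma conv_pt S x1 y1 x2 y2 l u v : convexS S -> S (x1,y1) -> S (x2,y2) -> 0 <= l <= 1 ->
  u = l*x1 + (1-l)*x2 -> v = l*y1 + (1-l)*y2 -> S (u,v).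
Proof. intros Hc H1 H2 Hl -> ->. apply Hc; auto. Qed.

Lemma refl_convex S : convexS S -> convexS (refl S).
Proof.
  intros Hc x1 y1 x2 y2 l H1 H2 Hl. unfold refl in *; simpl in *.
  eapply conv_pt; [exact Hc|exact H1|exact H2|exact Hl|reflexivity|ring].
Qed.

Lemma up_spec S x d : (exists y, S (x,y)) -> (forall y, S (x,y) -> y <= d) ->
  is_lub (fun y => S (x,y)) (up S x).
Proof. intros. apply lub_spec with d; auto. Qed.

Lemma sec_facts S x c d : convexS S -> (exists y, S (x,y)) -> (forall y, S (x,y) -> c <= y <= d) ->
  c <= lo S x /\ lo S x <= up S x /\ up S x <= d /\
  (forall y, S (x,y) -> lo S x <= y <= up S x) /\
  (forall y, lo S x < y < up S x -> S (x,y)).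
Proof.
  intros Hc [y0 Hy0] Hb.
  assert (Hu : is_lub (fun y => S (x,y)) (up S x)).
  { apply up_spec with d. exists y0; auto. intros y Hy; apply Hb; auto. }
  assert (Hu' : is_lub (fun y => refl S (x,y)) (up (refl S) x)).
  { apply up_spec with (-c). exists (-y0). unfold refl; simpl. rewrite Ropp_involutive. auto.
    intros y Hy. unfold refl in Hy; simpl in Hy. specialize (Hb _ Hy). lra. }
  unfold lo.
  assert (A1 : up S x <= d).
  { apply Hu. intros y Hy. apply Hb; auto. }
  assert (A2 : up (refl S) x <= - c).
  { apply Hu'. intros y Hy. unfold refl in Hy; simpl in Hy. specialize (Hb _ Hy). lra. }
  assert (A3 : forall y, S (x,y) -> - up (refl S) x <= y <= up S x).
  { intros y Hy. split.
    - assert (- y <= up (refl S) x). { apply Hu'. unfold refl; simpl. rewrite Ropp_involutive; auto. }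
      lra.
    - apply Hu. auto. }
  split; [lra|]. split; [specialize (A3 y0 Hy0); lra|]. split; [lra|]. split; [exact A3|].
  intros y Hy.
  destruct (lub_approx _ _ (up S x - y) Hu ltac:(lra)) as [y1 [Hy1 Hy1']].
  destruct (lub_approx _ _ (up (refl S) x + y) Hu' ltac:(lra)) as [y2' [Hy2 Hy2']].
  unfold refl in Hy2; simpl in Hy2.
  set (y2 := - y2') in *.
  assert (y2 < y) by (unfold y2; lra).
  assert (y < y1) by lra.
  apply (conv_pt S x y2 x y1 ((y1 - y) / (y1 - y2))); auto.
  - split. apply Rdiv_le_0_compat; lra.
    apply Rmult_le_reg_r with (y1 - y2); [lra|]. unfold Rdiv. rewrite Rmult_assoc, Rinv_l by lra. lra.
  - field. lra.
  - field. lra.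
Qed.

Lemma up_concave S c d : convexS S -> (forall x y, S (x,y) -> c <= y <= d) ->
  forall x x' l, Pr S x -> Pr S x' -> 0 <= l <= 1 ->
  l * up S x + (1 - l) * up S x' <= up S (l*x + (1-l)*x').
Proof.
  intros Hc Hb x x' l [y0 Hy0] [y0' Hy0'] Hl.
  set (z := l*x + (1-l)*x').
  assert (Hz : S (z, l*y0 + (1-l)*y0')) by (apply Hc; auto).
  assert (Hu : is_lub (fun y => S (x,y)) (up S x)).
  { apply up_spec with d. exists y0; auto. intros y Hy; apply (Hb _ _ Hy). }
  assert (Hu' : is_lub (fun y => S (x',y)) (up S x')).
  { apply up_spec with d. exists y0'; auto. intros y Hy; apply (Hb _ _ Hy). }
  assert (Hz' : is_lub (fun y => S (z,y)) (up S z)).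
  { apply up_spec with d. eexists; exact Hz. intros y Hy; apply (Hb _ _ Hy). }
  apply Rnot_lt_le. intro Hlt.
  set (g := l * up S x + (1 - l) * up S x' - up S z).
  destruct (lub_approx _ _ g Hu ltac:(unfold g; lra)) as [y1 [Hy1 Hy1']].
  destruct (lub_approx _ _ g Hu' ltac:(unfold g; lra)) as [y2 [Hy2 Hy2']].
  assert (S (z, l*y1 + (1-l)*y2)) by (apply Hc; auto).
  assert (l*y1 + (1-l)*y2 <= up S z) by (apply Hz'; auto).
  assert (l * (up S x - g) <= l * y1) by (apply Rmult_le_compat_l; lra).
  assert ((1-l) * (up S x' - g) <= (1-l) * y2) by (apply Rmult_le_compat_l; lra).
  destruct (Req_dec l 0) as [Hl0|Hl0].
  - subst l. assert ((1-0) * (up S x' - g) < (1-0) * y2) by (apply Rmult_lt_compat_l; lra).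
    unfold g in *; lra.
  - assert (l * (up S x - g) < l * y1) by (apply Rmult_lt_compat_l; lra).
    unfold g in *; lra.
Qed.

Definition alpha (S : pt -> Prop) : R := - lub (fun x => Pr S (- x)).
Definition beta (S : pt -> Prop) : R := lub (Pr S).

Lemma proj_facts S a b : convexS S -> (exists q, S q) -> (forall x y, S (x,y) -> a <= x <= b) ->
  a <= alpha S /\ alpha S <= beta S /\ beta S <= b /\
  (forall x, Pr S x -> alpha S <= x <= beta S) /\
  (forall x, alpha S < x < beta S -> Pr S x) /\
  (forall e, 0 < e -> exists x1, Pr S x1 /\ x1 < alpha S + e) /\
  (forall e, 0 < e -> exists x2, Pr S x2 /\ beta S - e < x2).
Proof.
  intros Hc [[x0 y0] H0] Hb.
  assert (Hu : is_lub (Pr S) (beta S)).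
  { apply lub_spec with b. exists x0, y0; auto. intros x [y Hy]; apply (Hb _ _ Hy). }
  assert (Hu' : is_lub (fun x => Pr S (-x)) (lub (fun x => Pr S (- x)))).
  { apply lub_spec with (-a). exists (-x0). rewrite Ropp_involutive. exists y0; auto.
    intros x [y Hy]. specialize (Hb _ _ Hy). lra. }
  unfold alpha.
  assert (A1 : beta S <= b). { apply Hu. intros x [y Hy]. apply (Hb _ _ Hy). }
  assert (A2 : lub (fun x => Pr S (- x)) <= - a).
  { apply Hu'. intros x [y Hy]. specialize (Hb _ _ Hy). lra. }
  assert (A3 : forall x, Pr S x -> - lub (fun x => Pr S (- x)) <= x <= beta S).
  { intros x Hx. split.
    - assert (- x <= lub (fun x => Pr S (- x))). { apply Hu'. rewrite Ropp_involutive; auto. }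
      lra.
    - apply Hu; auto. }
  assert (Hx0 : Pr S x0) by (exists y0; auto).
  assert (Ap1 : forall e, 0 < e -> exists x1, Pr S x1 /\ x1 < - lub (fun x => Pr S (- x)) + e).
  { intros e He. destruct (lub_approx _ _ e Hu' He) as [x1 [H1 H2]]. exists (-x1). split; auto. lra. }
  assert (Ap2 : forall e, 0 < e -> exists x2, Pr S x2 /\ beta S - e < x2).
  { intros e He. destruct (lub_approx _ _ e Hu He) as [x2 [H1 H2]]. exists x2. split; auto. }
  split; [lra|]. split; [specialize (A3 x0 Hx0); lra|]. split; [lra|]. split; [exact A3|].
  split; [|split; auto].
  intros x Hx.
  destruct (Ap1 (x - - lub (fun x => Pr S (- x)))) as [x1 [[y1 Hy1] Hx1]]; [lra|].
  destruct (Ap2 (beta S - x)) as [x2 [[y2 Hy2] Hx2]]; [lra|].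
  exists ((x2 - x)/(x2 - x1) * y1 + (1 - (x2 - x)/(x2 - x1)) * y2).
  apply (conv_pt S x1 y1 x2 y2 ((x2 - x)/(x2 - x1))); auto.
  - split. apply Rdiv_le_0_compat; lra.
    apply Rmult_le_reg_r with (x2 - x1); [lra|]. unfold Rdiv. rewrite Rmult_assoc, Rinv_l by lra. lra.
  - field. lra.
Qed.

Lemma ind_1 (S : pt -> Prop) q : S q -> ind S q = 1.
Proof. intros H. unfold ind. destruct (excluded_middle_informative (S q)); tauto. Qed.
Lemma ind_0 (S : pt -> Prop) q : ~ S q -> ind S q = 0.
Proof. intros H. unfold ind. destruct (excluded_middle_informative (S q)); tauto. Qed.
Lemma ind_01 (S : pt -> Prop) q : 0 <= ind S q <= 1.
Proof. unfold ind. destruct (excluded_middle_informative (S q)); lra. Qed.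

Definition hcont (h : pt -> R) := forall x y, continuity_2d_pt (fun u v => h (u,v)) x y.

Lemma hint h x s t : hcont h -> ex_RInt (fun y => h (x,y)) s t.
Proof.
  intros hc. apply (@ex_RInt_continuous R_CompleteNormedModule). intros z _.
  apply (cont2_1d (fun u v => h (u,v))). apply hc.
Qed.

Lemma inner_int S h c d x : convexS S -> (forall x y, S (x,y) -> c <= y <= d) -> hcont h ->
  ex_RInt (fun y => ind S (x,y) * h (x,y)) c d /\
  (Pr S x -> RInt (fun y => ind S (x,y) * h (x,y)) c d = RInt (fun y => h (x,y)) (lo S x) (up S x)) /\
  (~ Pr S x -> RInt (fun y => ind S (x,y) * h (x,y)) c d = 0).
Proof.
  intros Hc Hb hc.
  destruct (classic (Pr S x)) as [HP|HP].
  - destruct (sec_facts S x c d Hc HP (fun y Hy => Hb x y Hy)) as (A1 & A2 & A3 & A4 & A5).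
    set (l := lo S x) in *. set (u := up S x) in *.
    set (F := fun y => ind S (x,y) * h (x,y)).
    assert (E1 : forall y, Rmin c l < y < Rmax c l -> F y = 0).
    { intros y Hy. rewrite Rmin_left, Rmax_right in Hy by lra. unfold F.
      rewrite ind_0. ring. intro Hs. specialize (A4 y Hs). lra. }
    assert (E2 : forall y, Rmin l u < y < Rmax l u -> h (x,y) = F y).
    { intros y Hy. rewrite Rmin_left, Rmax_right in Hy by lra. unfold F.
      rewrite ind_1. ring. apply A5. lra. }
    assert (E3 : forall y, Rmin u d < y < Rmax u d -> F y = 0).
    { intros y Hy. rewrite Rmin_left, Rmax_right in Hy by lra. unfold F.
      rewrite ind_0. ring. intro Hs. specialize (A4 y Hs). lra. }
    destruct (RInt_zero_ext F c l E1) as [X1 V1].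
    destruct (RInt_zero_ext F u d E3) as [X3 V3].
    assert (X2 : ex_RInt F l u) by (apply ex_RInt_ext with (1 := E2); apply hint; auto).
    assert (X12 : ex_RInt F c u) by (apply ex_RInt_Chasles with l; auto).
    split; [apply ex_RInt_Chasles with u; auto|]. split; [|tauto].
    intros _. change (RInt F c d = RInt (fun y => h (x,y)) l u).
    rewrite <- (RInt_Chasles F c u d) by auto. rewrite <- (RInt_Chasles F c l u) by auto.
    rewrite V1, V3. rewrite (RInt_ext _ _ _ _ E2). unfold plus; simpl. ring.
  - assert (Z : forall y, Rmin c d < y < Rmax c d -> ind S (x,y) * h (x,y) = 0).
    { intros y _. rewrite ind_0. ring. intro Hs. apply HP. exists y; auto. }
    destruct (RInt_zero_ext _ c d Z) as [X V].
    split; auto. split; auto. tauto.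
Qed.

Definition Phi (S : pt -> Prop) (h : pt -> R) (x : R) : R := RInt (fun y => h (x,y)) (lo S x) (up S x).

Lemma Pr_refl S x : Pr (refl S) x <-> Pr S x.
Proof.
  split; intros [y Hy]. exists (-y); exact Hy. exists (-y). unfold refl; simpl. rewrite Ropp_involutive; auto.
Qed.

Lemma Phi_cont S h a b c d M eta z : convexS S ->
  (forall x y, S (x,y) -> a <= x <= b /\ c <= y <= d) -> hcont h ->
  0 <= M -> (forall x y, a <= x <= b -> c <= y <= d -> Rabs (h (x,y)) <= M) ->
  (exists q, S q) -> 0 < eta -> alpha S + eta <= z <= beta S - eta ->
  continuous (Phi S h) z.
Proof.
  intros Hc Hb hc HM0 HM Hne Heta Hz.
  assert (Hbx : forall x y, S (x,y) -> a <= x <= b) by (intros x y H; apply (Hb x y H)).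
  assert (Hby : forall x y, S (x,y) -> c <= y <= d) by (intros x y H; apply (Hb x y H)).
  destruct (proj_facts S a b Hc Hne Hbx) as (P1 & P2 & P3 & P4 & P5 & P6 & P7).
  destruct (P6 (eta/4) ltac:(lra)) as [x1 [Hx1 Hx1']].
  destruct (P7 (eta/4) ltac:(lra)) as [x2 [Hx2 Hx2']].
  pose proof (P4 _ Hx1) as Hx1r. pose proof (P4 _ Hx2) as Hx2r.
  assert (PrI : forall x, x1 <= x <= x2 -> Pr S x).
  { intros x Hx. destruct (Req_dec x x1) as [->|N1]; auto.
    destruct (Req_dec x x2) as [->|N2]; auto. apply P5. lra. }
  assert (Hcd : c <= d). { destruct Hx1 as [y Hy]. specialize (Hby _ _ Hy). lra. }
  set (K := (d - c) / (eta / 4)).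
  assert (HK : 0 <= K) by (unfold K; apply Rdiv_le_0_compat; lra).
  assert (Lu : forall x y, x1 + eta/4 <= x <= x2 - eta/4 -> x1 + eta/4 <= y <= x2 - eta/4 ->
     Rabs (up S x - up S y) <= K * Rabs (x - y)).
  { intros x y Hx Hy. unfold K. apply (concave_lip (up S) x1 x2 c d (eta/4)); auto; [lra| |].
    - intros u v l Hu Hv Hl. apply (up_concave S c d); auto.
    - intros u Hu. destruct (sec_facts S u c d Hc (PrI u Hu) (fun y Hy => Hby u y Hy)) as (A1&A2&A3&_). lra. }
  assert (Ll : forall x y, x1 + eta/4 <= x <= x2 - eta/4 -> x1 + eta/4 <= y <= x2 - eta/4 ->
     Rabs (lo S x - lo S y) <= K * Rabs (x - y)).
  { intros x y Hx Hy. unfold lo. replace (- up (refl S) x - - up (refl S) y) with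
      (- (up (refl S) x - up (refl S) y)) by ring. rewrite Rabs_Ropp.
    unfold K. replace (d - c) with (-c - - d) by ring.
    apply (concave_lip (up (refl S)) x1 x2 (-d) (-c) (eta/4)); auto; [lra| |].
    - intros u v l Hu Hv Hl. apply (up_concave (refl S) (-d) (-c)).
      + apply refl_convex; auto.
      + intros u' v' Hs. unfold refl in Hs; simpl in Hs. specialize (Hby _ _ Hs). lra.
      + apply Pr_refl; auto.
      + apply Pr_refl; auto.
      + auto.
    - intros u Hu. destruct (sec_facts S u c d Hc (PrI u Hu) (fun y Hy => Hby u y Hy)) as (A1&A2&A3&_).
      unfold lo in *. lra. }
  apply cont_eps. intros eps Heps.
  set (e1 := eps / (2 * (d - c) + 2)).
  assert (He1 : 0 < e1) by (unfold e1; apply Rdiv_lt_0_compat; lra).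
  destruct (uniform_continuity_2d (fun u v => h (u,v)) a b c d (fun x y _ _ => hc x y) (mkposreal _ He1)) as [du Hdu].
  simpl in Hdu.
  set (e2 := eps / (4 * (M * K + 1))).
  assert (He2 : 0 < e2) by (unfold e2; apply Rdiv_lt_0_compat; [lra|]; nra).
  exists (Rmin (eta/2) (Rmin du e2)). split.
  { apply Rmin_pos; [lra|]. apply Rmin_pos; [apply cond_pos|exact He2]. }
  intros x Hx.
  assert (Hxz : Rabs (x - z) < eta/2) by (eapply Rlt_le_trans; [exact Hx|apply Rmin_l]).
  assert (Hx3 : Rabs (x - z) < du) by (eapply Rlt_le_trans; [exact Hx|eapply Rle_trans; [apply Rmin_r|apply Rmin_l]]).
  assert (Hx4 : Rabs (x - z) < e2) by (eapply Rlt_le_trans; [exact Hx|eapply Rle_trans; [apply Rmin_r|apply Rmin_r]]).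
  apply Rabs_def2 in Hxz.
  assert (Rx : x1 + eta/4 <= x <= x2 - eta/4) by lra.
  assert (Rz : x1 + eta/4 <= z <= x2 - eta/4) by lra.
  destruct (sec_facts S x c d Hc (PrI x ltac:(lra)) (fun y Hy => Hby x y Hy)) as (Bx1&Bx2&Bx3&_).
  destruct (sec_facts S z c d Hc (PrI z ltac:(lra)) (fun y Hy => Hby z y Hy)) as (Bz1&Bz2&Bz3&_).
  assert (Hxab : a <= x <= b) by lra. assert (Hzab : a <= z <= b) by lra.
  unfold Phi.
  set (lx := lo S x) in *. set (ux := up S x) in *. set (lz := lo S z) in *. set (uz := up S z) in *.
  assert (T1 : Rabs (RInt (fun y => h (x,y)) lx ux - RInt (fun y => h (z,y)) lx ux) <= e1 * (d - c)).
  { rewrite <- (RInt_minus (fun y => h (x,y)) (fun y => h (z,y))) by (apply hint; auto).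
    eapply Rle_trans. apply RInt_abs_bound. apply (ex_RInt_minus (fun y => h (x,y)) (fun y => h (z,y))); apply hint; auto.
    - intros y Hy. rewrite Rmin_left, Rmax_right in Hy by lra. unfold minus, plus, opp; simpl.
      left. apply Hdu; try lra. rewrite Rminus_diag, Rabs_R0; apply cond_pos.
    - rewrite Rabs_right by lra. apply Rmult_le_compat_l; lra. }
  assert (T2 : RInt (fun y => h (z,y)) lx ux - RInt (fun y => h (z,y)) lz uz =
     RInt (fun y => h (z,y)) lx lz + RInt (fun y => h (z,y)) uz ux).
  { rewrite <- (RInt_Chasles (fun y => h (z,y)) lx uz ux) by (apply hint; auto).
    rewrite <- (RInt_Chasles (fun y => h (z,y)) lx lz uz) by (apply hint; auto).
    unfold plus; simpl. ring. }
  assert (Bd : forall s t, c <= s <= d -> c <= t <= d -> Rabs (RInt (fun y => h (z,y)) s t) <= M * Rabs (t - s)).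
  { intros s t Hs Ht. apply RInt_abs_bound. apply hint; auto.
    intros y Hy. apply HM; auto. split. eapply Rle_trans; [|apply Hy]. apply Rmin_glb; lra.
    eapply Rle_trans; [apply Hy|]. apply Rmax_lub; lra. }
  assert (T3 : Rabs (RInt (fun y => h (z,y)) lx lz) <= M * (K * Rabs (x - z))).
  { eapply Rle_trans. apply Bd; lra. apply Rmult_le_compat_l; auto.
    rewrite Rabs_minus_sym. apply Ll; auto. }
  assert (T4 : Rabs (RInt (fun y => h (z,y)) uz ux) <= M * (K * Rabs (x - z))).
  { eapply Rle_trans. apply Bd; lra. apply Rmult_le_compat_l; auto. apply Lu; auto. }
  assert (T5 : 2 * (M * (K * Rabs (x - z))) <= 2 * (M * K) * e2).
  { assert (0 <= M * K) by nra. rewrite <- Rmult_assoc. nra. }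
  assert (T6 : 2 * (M * K) * e2 < eps / 2).
  { unfold e2. assert (0 <= M * K) by nra.
    apply Rmult_lt_reg_r with (4 * (M * K + 1)); [nra|].
    unfold Rdiv. field_simplify; [|nra]. nra. }
  assert (T7 : e1 * (d - c) < eps / 2).
  { unfold e1. apply Rmult_lt_reg_r with (2 * (d - c) + 2); [lra|].
    unfold Rdiv. field_simplify; [|lra]. nra. }
  replace (RInt (fun y => h (x,y)) lx ux - RInt (fun y => h (z,y)) lz uz) with
    ((RInt (fun y => h (x,y)) lx ux - RInt (fun y => h (z,y)) lx ux) +
     (RInt (fun y => h (z,y)) lx lz + RInt (fun y => h (z,y)) uz ux)) by (rewrite <- T2; ring).
  eapply Rle_lt_trans. apply Rabs_triang.
  eapply Rle_lt_trans. apply Rplus_le_compat. exact T1. apply Rabs_triang.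
  lra.
Qed.

Lemma int_convex S h a b c d : a <= b -> c <= d -> convexS S ->
  (forall x y, S (x,y) -> a <= x <= b /\ c <= y <= d) -> hcont h ->
  exists I, Int2b a b c d (fun q => ind S q * h q) I.
Proof.
  intros Hab Hcd Hc Hb hc.
  assert (Hbx : forall x y, S (x,y) -> a <= x <= b) by (intros x y H; apply (Hb x y H)).
  assert (Hby : forall x y, S (x,y) -> c <= y <= d) by (intros x y H; apply (Hb x y H)).
  destruct (cont_bound (fun u v => h (u,v)) a b c d hc) as [M [HM0 HM]].
  set (Fin := fun x => RInt (fun y => ind S (x,y) * h (x,y)) c d).
  assert (Hin : forall x, ex_RInt (fun y => ind S (x,y) * h (x,y)) c d /\
    (Pr S x -> Fin x = Phi S h x) /\ (~ Pr S x -> Fin x = 0)).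
  { intros x. apply (inner_int S h c d x Hc Hby hc). }
  assert (FinB : forall x, Rabs (Fin x) <= M * (d - c)).
  { intros x. rewrite Rmult_comm. apply abs_RInt_le_const; auto. apply Hin.
    intros t Ht. destruct (classic (S (x,t))) as [Hs|Hs].
    - rewrite ind_1 by auto. rewrite Rmult_1_l. apply HM; auto. apply (Hbx _ _ Hs).
    - rewrite ind_0 by auto. rewrite Rmult_0_l, Rabs_R0. auto. }
  assert (Fout : ex_RInt Fin a b).
  { destruct (classic (exists q, S q)) as [Hne|Hne].
    2:{ apply ex_RInt_ext with (fun _ => 0). intros x _. symmetry. apply Hin.
        intros [y Hy]. apply Hne. eexists; eauto. apply ex_RInt_const. }
    destruct (proj_facts S a b Hc Hne Hbx) as (P1 & P2 & P3 & P4 & P5 & P6 & P7).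
    set (al := alpha S) in *. set (be := beta S) in *.
    assert (Fin0 : forall x, ~ (al <= x <= be) -> Fin x = 0).
    { intros x Hx. apply Hin. intro HP. apply Hx. apply P4; auto. }
    apply approx_int; auto. intros eps Heps.
    set (B := M * (d - c)). assert (HB : 0 <= B) by (unfold B; nra).
    set (eta := eps / (4 * (B + 1))).
    assert (Heta : 0 < eta) by (unfold eta; apply Rdiv_lt_0_compat; lra).
    assert (Heta2 : 2 * (B * eta) < eps).
    { unfold eta. apply Rmult_lt_reg_r with (4 * (B + 1)); [lra|].
      unfold Rdiv. field_simplify; [|lra]. nra. }
    set (k := fun x => B * ind1 al (al + eta) x + B * ind1 (be - eta) be x).
    assert (Kex : ex_RInt k a b).
    { apply (ex_RInt_plus (fun x => B * ind1 al (al + eta) x)).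
      apply (ex_RInt_scal (ind1 al (al+eta))). apply ind1_int; lra.
      apply (ex_RInt_scal (ind1 (be-eta) be)). apply ind1_int; lra. }
    assert (Kint : RInt k a b < eps).
    { unfold k. rewrite (RInt_plus (fun x => B * ind1 al (al + eta) x)).
      rewrite (RInt_scal (ind1 al (al+eta))), (RInt_scal (ind1 (be-eta) be)).
      destruct (ind1_int a b al (al+eta)) as [_ I1]; try lra.
      destruct (ind1_int a b (be-eta) be) as [_ I2]; try lra.
      unfold plus, scal; simpl; unfold mult; simpl.
      assert (B * RInt (ind1 al (al + eta)) a b <= B * eta) by (apply Rmult_le_compat_l; lra).
      assert (B * RInt (ind1 (be - eta) be) a b <= B * eta) by (apply Rmult_le_compat_l; lra).
      lra.
      apply ind1_int; lra. apply ind1_int; lra.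
      apply (ex_RInt_scal (ind1 al (al+eta))). apply ind1_int; lra.
      apply (ex_RInt_scal (ind1 (be-eta) be)). apply ind1_int; lra. }
    assert (Kpos : forall t, 0 <= k t).
    { intros t. unfold k, ind1. dec_all; nra. }
    assert (Kge : forall t, (al <= t <= al + eta \/ be - eta <= t <= be) -> B <= k t).
    { intros t Ht. unfold k, ind1. dec_all; nra. }
    destruct (Rle_dec (al + eta) (be - eta)) as [Hle|Hgt].
    - set (g := fun x => if Rle_dec (al+eta) x then if Rle_dec x (be-eta) then Fin x else 0 else 0).
      assert (Fmid : ex_RInt Fin (al + eta) (be - eta)).
      { apply ex_RInt_ext with (Phi S h).
        - intros x Hx. rewrite Rmin_left, Rmax_right in Hx by lra. symmetry. apply Hin. apply P5. lra.
        - apply (@ex_RInt_continuous R_CompleteNormedModule). intros z Hz.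
          rewrite Rmin_left, Rmax_right in Hz by lra.
          apply (Phi_cont S h a b c d M eta z); auto. }
      exists g, k. split.
      { apply (cut_int Fin a b (al+eta) (be-eta)); auto; lra. }
      split; auto. split; auto.
      intros t Ht. unfold g. specialize (FinB t). fold B in FinB.
      destruct (Rle_dec (al + eta) t); [destruct (Rle_dec t (be - eta))|].
      + rewrite Rminus_diag, Rabs_R0. auto.
      + destruct (classic (al <= t <= be)).
        * rewrite Rminus_0_r. eapply Rle_trans; [exact FinB|]. apply Kge. lra.
        * rewrite Fin0 by auto. rewrite Rminus_0_r, Rabs_R0. auto.
      + destruct (classic (al <= t <= be)).
        * rewrite Rminus_0_r. eapply Rle_trans; [exact FinB|]. apply Kge. lra.
        * rewrite Fin0 by auto. rewrite Rminus_0_r, Rabs_R0. auto.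
    - exists (fun _ => 0), k. split. apply ex_RInt_const. split; auto. split; auto.
      intros t Ht. specialize (FinB t). fold B in FinB.
      destruct (classic (al <= t <= be)).
      * rewrite Rminus_0_r. eapply Rle_trans; [exact FinB|]. apply Kge. lra.
      * rewrite Fin0 by auto. rewrite Rminus_0_r, Rabs_R0. auto. }
  exists (RInt Fin a b).
  split; auto. split; auto. split.
  { intros x y Hn. rewrite ind_0. ring. intro Hs. apply Hn. apply Hb; auto. }
  split. intros x _; apply Hin. split; auto.
Qed.

Fixpoint combw (l : R) (w1 w2 : list R) : list R :=
  match w1, w2 with
  | a :: w1', b :: w2' => (l * a + (1 - l) * b) :: combw l w1' w2'
  | _, _ => nil
  end.

Lemma combw_props l vs : forall w1 w2, length w1 = length vs -> length w2 = length vs ->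
  Forall (fun c => 0 <= c) w1 -> Forall (fun c => 0 <= c) w2 -> 0 <= l <= 1 ->
  length (combw l w1 w2) = length vs /\ Forall (fun c => 0 <= c) (combw l w1 w2) /\
  fold_right Rplus 0 (combw l w1 w2) = l * fold_right Rplus 0 w1 + (1-l) * fold_right Rplus 0 w2 /\
  lincomb (combw l w1 w2) vs = (l * fst (lincomb w1 vs) + (1-l) * fst (lincomb w2 vs),
                                l * snd (lincomb w1 vs) + (1-l) * snd (lincomb w2 vs)).
Proof.
  induction vs as [|v vs IH]; intros w1 w2 L1 L2 F1 F2 Hl.
  - destruct w1; destruct w2; simpl in *; try discriminate. repeat split; auto. ring. f_equal; ring.
  - destruct w1 as [|a w1]; destruct w2 as [|b w2]; simpl in *; try discriminate.
    inversion F1; inversion F2; subst.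
    destruct (IH w1 w2) as (A1 & A2 & A3 & A4); auto.
    repeat split.
    + simpl; f_equal; auto.
    + constructor; auto. nra.
    + simpl. rewrite A3. ring.
    + simpl. rewrite A4. unfold vadd, vscal; simpl. f_equal; ring.
Qed.

Lemma hull_convex vs : convexS (in_hull vs).
Proof.
  intros x1 y1 x2 y2 l [w1 (L1 & F1 & S1 & E1)] [w2 (L2 & F2 & S2 & E2)] Hl.
  destruct (combw_props l vs w1 w2) as (A1 & A2 & A3 & A4); auto.
  exists (combw l w1 w2). split; auto. split; auto. split.
  rewrite A3, S1, S2; ring. rewrite A4, <- E1, <- E2. reflexivity.
Qed.



Lemma lincomb_bound vs B : (forall v, In v vs -> Rabs (fst v) <= B /\ Rabs (snd v) <= B) -> 0 <= B ->
  forall w, Forall (fun c => 0 <= c) w ->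
  Rabs (fst (lincomb w vs)) <= fold_right Rplus 0 w * B /\ Rabs (snd (lincomb w vs)) <= fold_right Rplus 0 w * B.
Proof.
  intros HB HB0. induction vs as [|v vs IH]; intros w Fw.
  - assert (0 <= fold_right Rplus 0 w).
    { induction Fw; simpl; lra. }
    destruct w; simpl in *; rewrite Rabs_R0; split; nra.
  - destruct w as [|c w]; simpl.
    + rewrite Rabs_R0; lra.
    + inversion Fw; subst.
      destruct (IH (fun v' H' => HB v' (or_intror H')) w) as [I1 I2]; auto.
      destruct (HB v (or_introl eq_refl)) as [B1 B2].
      unfold vadd, vscal; simpl. split.
      * eapply Rle_trans. apply Rabs_triang. rewrite Rabs_mult, (Rabs_right c) by lra.
        assert (c * Rabs (fst v) <= c * B) by (apply Rmult_le_compat_l; lra). nra.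
      * eapply Rle_trans. apply Rabs_triang. rewrite Rabs_mult, (Rabs_right c) by lra.
        assert (c * Rabs (snd v) <= c * B) by (apply Rmult_le_compat_l; lra). nra.
Qed.

Fixpoint vbound (vs : list pt) : R :=
  match vs with nil => 0 | v :: vs' => Rabs (fst v) + Rabs (snd v) + vbound vs' end.

Lemma vbound_spec vs : 0 <= vbound vs /\ forall v, In v vs -> Rabs (fst v) <= vbound vs /\ Rabs (snd v) <= vbound vs.
Proof.
  induction vs as [|v vs [IH1 IH2]]; simpl.
  - split; [lra|tauto].
  - generalize (Rabs_pos (fst v)) (Rabs_pos (snd v)). intros. split; [lra|].
    intros v' [<-|Hv]; [lra|]. specialize (IH2 v' Hv). lra.
Qed.

Lemma polygon_facts Q : is_convex_polygon Q ->
  convexS Q /\ exists R0, 0 < R0 /\ forall q, Q q -> -R0 <= fst q <= R0 /\ -R0 <= snd q <= R0.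
Proof.
  intros [vs [HQ _]]. split.
  - intros x1 y1 x2 y2 l H1 H2 Hl. apply HQ. apply hull_convex; [apply HQ; auto|apply HQ; auto|auto].
  - destruct (vbound_spec vs) as [B0 HB]. exists (vbound vs + 1). split; [lra|].
    intros q Hq. apply HQ in Hq. destruct Hq as [w (L & F & S & E)].
    destruct (lincomb_bound vs (vbound vs) HB B0 w F) as [I1 I2]. rewrite S, <- E in *.
    apply Rabs_le_between in I1 , I2. lra.
Qed.

Definition dd (p : nat -> pt) (k : nat) (q : pt) : R :=
  (fst q - fst (p k))^2 + (snd q - snd (p k))^2.

Lemma dd_pos p k q : 0 <= dd p k q.
Proof. unfold dd. apply Rplus_le_le_0_compat; apply pow2_ge_0. Qed.

Lemma vnorm_dd p k q : vnorm (vsub q (p k)) = sqrt (dd p k q).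
Proof. reflexivity. Qed.

Lemma vnorm_le p v w q : vnorm (vsub q (p v)) <= vnorm (vsub q (p w)) <-> dd p v q <= dd p w q.
Proof.
  rewrite !vnorm_dd. split; intros H.
  - apply sqrt_le_0; auto using dd_pos.
  - apply sqrt_le_1; auto using dd_pos.
Qed.

Definition pval (D : nat -> R) (ab : nat * nat) : R := / 2 * (D (fst ab) + D (snd ab)).

Definition mfold (val : nat * nat -> R) (l : list (nat * nat)) : R :=
  fold_right (fun ab acc => Rmin (val ab) acc) (val (0%nat,1%nat)) l.

Lemma minC_mfold n p q : minC n p q = mfold (pval (fun k => dd p k q)) (pairsC n).
Proof.
  unfold minC, mfold. 
  assert (E : forall ab, f (vnorm (vsub q (p (fst ab)))) (vnorm (vsub q (p (snd ab)))) =
     pval (fun k => dd p k q) ab).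
  { intros ab. unfold f, pval. rewrite !vnorm_dd, !pow2_sqrt by apply dd_pos. reflexivity. }
  induction (pairsC n) as [|ab l IH]; simpl.
  - apply (E (0%nat,1%nat)).
  - rewrite IH, E. reflexivity.
Qed.

Lemma mfold_le val l ab : In ab l -> mfold val l <= val ab.
Proof.
  induction l as [|x l IH]; simpl; [tauto|]. intros [->|H].
  - apply Rmin_l.
  - eapply Rle_trans; [apply Rmin_r|]. apply IH; auto.
Qed.

Lemma mfold_ge val l m : (forall ab, In ab l -> m <= val ab) -> m <= val (0%nat,1%nat) -> m <= mfold val l.
Proof.
  induction l as [|x l IH]; simpl; intros H H0; auto.
  apply Rmin_glb; auto.
Qed.

Lemma Rmin_lip a b a' b' L : Rabs (a - a') <= L -> Rabs (b - b') <= L -> Rabs (Rmin a b - Rmin a' b') <= L.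
Proof.
  intros H1 H2. apply Rabs_le_between in H1. apply Rabs_le_between in H2.
  unfold Rmin; destruct (Rle_dec a b); destruct (Rle_dec a' b'); apply Rabs_le; lra.
Qed.

Lemma mfold_lip v1 v2 l L : (forall ab, In ab l -> Rabs (v1 ab - v2 ab) <= L) ->
  Rabs (v1 (0%nat,1%nat) - v2 (0%nat,1%nat)) <= L -> Rabs (mfold v1 l - mfold v2 l) <= L.
Proof.
  induction l as [|x l IH]; simpl; intros H H0; auto.
  apply Rmin_lip; auto.
Qed.

Lemma in_pairsC n a b : In (a,b) (pairsC n) <-> (a < b < n)%nat.
Proof.
  unfold pairsC. rewrite in_flat_map. split.
  - intros [x [Hx Hy]]. apply in_seq in Hx. apply in_map_iff in Hy. destruct Hy as [a' [E Ha]].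
    inversion E; subst. apply in_seq in Ha. lia.
  - intros H. exists b. split. apply in_seq; lia. apply in_map_iff. exists a. split; auto. apply in_seq; lia.
Qed.

Lemma in_others n i j : In j (others n i) <-> (j < n)%nat /\ j <> i.
Proof.
  unfold others. rewrite filter_In, in_seq. split.
  - intros [H1 H2]. apply Bool.negb_true_iff in H2. apply PeanoNat.Nat.eqb_neq in H2. lia.
  - intros [H1 H2]. split. lia. apply Bool.negb_true_iff. apply PeanoNat.Nat.eqb_neq. auto.
Qed.

Lemma others_nodup n i : NoDup (others n i).
Proof. apply NoDup_filter, seq_NoDup. Qed.

Lemma others_length n i : (length (others n i) <= n)%nat.
Proof. unfold others. rewrite <- (length_seq n 0) at 2. apply filter_length_le. Qed.

Definition sumG {A : Type} (l : list A) (F : A -> R) : R := fold_right (fun j acc => F j + acc) 0 l.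

Lemma sumR_G l F : sumR l F = sumG l F.
Proof. reflexivity. Qed.

Lemma sumG_ext {A} (l : list A) F1 F2 : (forall j, In j l -> F1 j = F2 j) -> sumG l F1 = sumG l F2.
Proof. induction l as [|x l IH]; simpl; intros H; auto. rewrite H, IH; auto. Qed.

Lemma sumG_plus {A} (l : list A) F1 F2 c : sumG l (fun j => F1 j + c * F2 j) = sumG l F1 + c * sumG l F2.
Proof. induction l as [|x l IH]; simpl; [ring|]. rewrite IH; ring. Qed.

Lemma sumG_const {A} (l : list A) F c : sumG l (fun j => c * F j) = c * sumG l F.
Proof. induction l as [|x l IH]; simpl; [ring|]. rewrite IH; ring. Qed.

Lemma sumG_nonneg {A} (l : list A) F : (forall j, In j l -> 0 <= F j) -> 0 <= sumG l F.
Proof. induction l as [|x l IH]; simpl; intros H; [lra|]. generalize (H x (or_introl eq_refl)) (IH (fun j Hj => H j (or_intror Hj))). lra. Qed.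

Lemma sumG_ge_term {A} (l : list A) F x : In x l -> (forall j, In j l -> 0 <= F j) -> F x <= sumG l F.
Proof.
  induction l as [|y l IH]; simpl; intros Hx H; [tauto|].
  destruct Hx as [->|Hx].
  - generalize (sumG_nonneg l F (fun j Hj => H j (or_intror Hj))). lra.
  - generalize (H y (or_introl eq_refl)) (IH Hx (fun j Hj => H j (or_intror Hj))). lra.
Qed.

Lemma sumG_zero {A} (l : list A) F : (forall j, In j l -> F j = 0) -> sumG l F = 0.
Proof. induction l as [|y l IH]; simpl; intros H; auto. rewrite H, IH; auto. ring. Qed.

Lemma sumG_single {A} (l : list A) F x : NoDup l -> In x l -> (forall j, In j l -> j <> x -> F j = 0) ->
  sumG l F = F x.
Proof.
  induction l as [|y l IH]; simpl; intros Hd Hx H; [tauto|].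
  inversion Hd; subst. destruct Hx as [->|Hx].
  - rewrite (sumG_zero l F). ring.
    intros j Hj. apply H; auto. intro; subst; auto.
  - rewrite H; [|auto|intro; subst; auto]. rewrite IH; auto. ring.
Qed.


Lemma sumG_abs {A} (l : list A) F B : (forall j, In j l -> Rabs (F j) <= B) -> Rabs (sumG l F) <= INR (length l) * B.
Proof.
  induction l as [|y l IH]; intros H. simpl. rewrite Rabs_R0; lra.
  change (length (y :: l)) with (S (length l)). rewrite S_INR.
  change (sumG (y :: l) F) with (F y + sumG l F).
  eapply Rle_trans. apply Rabs_triang.
  generalize (H y (or_introl eq_refl)) (IH (fun j Hj => H j (or_intror Hj))). lra.
Qed.

Lemma Int2b_sum {A} (l : list A) a b c d (g : A -> pt -> R) (I : A -> R) : a <= b -> c <= d ->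
  (forall j, In j l -> Int2b a b c d (g j) (I j)) ->
  Int2b a b c d (fun q => sumG l (fun j => g j q)) (sumG l I).
Proof.
  intros Hab Hcd. induction l as [|y l IH]; simpl; intros H.
  - apply Int2b_zero; auto.
  - apply Int2b_ext with (fun q => g y q + 1 * sumG l (fun j => g j q)).
    intros; ring. replace (I y + sumG l I) with (I y + 1 * sumG l I) by ring.
    apply Int2b_lin; auto.
Qed.

Lemma argmin (l : list nat) (D : nat -> R) : l <> nil -> exists a, In a l /\ forall w, In w l -> D a <= D w.
Proof.
  induction l as [|x l IH]; intros Hne; [tauto|].
  destruct l as [|y l'].
  - exists x. split; [left; auto|]. intros w [<-|[]]. lra.
  - destruct (IH ltac:(discriminate)) as [a [Ha Hm]].
    destruct (Rle_dec (D x) (D a)).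
    + exists x. split; [left; auto|]. intros w [<-|Hw]. lra. specialize (Hm w Hw). lra.
    + exists a. split; [right; auto|]. intros w [<-|Hw]. lra. auto.
Qed.

Lemma pair_ge (D : nat -> R) n a0 b0 a b : a0 <> b0 -> a <> b -> (a < n)%nat -> (b < n)%nat ->
  (forall w, (w < n)%nat -> w <> a0 -> w <> b0 -> D a0 < D w /\ D b0 < D w) ->
  D a0 + D b0 <= D a + D b.
Proof.
  intros N0 N Ha Hb Hw.
  destruct (PeanoNat.Nat.eq_dec a a0); destruct (PeanoNat.Nat.eq_dec a b0);
  destruct (PeanoNat.Nat.eq_dec b a0); destruct (PeanoNat.Nat.eq_dec b b0); subst; try congruence;
  try lra.
  all: try (destruct (Hw b) as [H1 H2]; auto; lra).
  all: try (destruct (Hw a) as [H1 H2]; auto; lra).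
  destruct (Hw a) as [H1 H2]; auto. destruct (Hw b) as [H3 H4]; auto. lra.
Qed.

Lemma mfold_top2 (D : nat -> R) n a0 b0 : (2 <= n)%nat -> (a0 < n)%nat -> (b0 < n)%nat -> a0 <> b0 ->
  (forall w, (w < n)%nat -> w <> a0 -> w <> b0 -> D a0 < D w /\ D b0 < D w) ->
  mfold (pval D) (pairsC n) = / 2 * (D a0 + D b0).
Proof.
  intros Hn Ha Hb Nab Hw.
  apply Rle_antisym.
  - destruct (PeanoNat.Nat.lt_ge_cases a0 b0).
    + eapply Rle_trans. apply mfold_le with (ab := (a0,b0)). apply in_pairsC; lia.
      unfold pval; simpl; lra.
    + eapply Rle_trans. apply mfold_le with (ab := (b0,a0)). apply in_pairsC; lia.
      unfold pval; simpl; lra.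
  - apply mfold_ge.
    + intros [a b] Hab. apply in_pairsC in Hab. unfold pval; simpl.
      assert (D a0 + D b0 <= D a + D b) by (apply (pair_ge D n a0 b0 a b); auto; lia).
      lra.
    + unfold pval; simpl.
      assert (D a0 + D b0 <= D 0%nat + D 1%nat) by (apply (pair_ge D n a0 b0 0 1); auto; lia).
      lra.
Qed.

Lemma hcont_const c : hcont (fun _ => c).
Proof. intros x y. apply continuity_2d_pt_const. Qed.
Lemma hcont_fst : hcont fst.
Proof. intros x y. apply continuity_2d_pt_id1. Qed.
Lemma hcont_snd : hcont snd.
Proof. intros x y. apply continuity_2d_pt_id2. Qed.
Lemma hcont_plus g1 g2 : hcont g1 -> hcont g2 -> hcont (fun q => g1 q + g2 q).
Proof. intros H1 H2 x y. apply (continuity_2d_pt_plus (fun u v => g1 (u,v)) (fun u v => g2 (u,v))); auto. Qed.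
Lemma hcont_minus g1 g2 : hcont g1 -> hcont g2 -> hcont (fun q => g1 q - g2 q).
Proof. intros H1 H2 x y. apply (continuity_2d_pt_minus (fun u v => g1 (u,v)) (fun u v => g2 (u,v))); auto. Qed.
Lemma hcont_mult g1 g2 : hcont g1 -> hcont g2 -> hcont (fun q => g1 q * g2 q).
Proof. intros H1 H2 x y. apply (continuity_2d_pt_mult (fun u v => g1 (u,v)) (fun u v => g2 (u,v))); auto. Qed.
Lemma hcont_ext g1 g2 : (forall q, g1 q = g2 q) -> hcont g1 -> hcont g2.
Proof. intros E H. replace g2 with g1; auto. apply functional_extensionality; auto. Qed.

Lemma hcont_min g1 g2 : hcont g1 -> hcont g2 -> hcont (fun q => Rmin (g1 q) (g2 q)).
Proof.
  intros H1 H2 x y eps. destruct (H1 x y eps) as [d1 Hd1]. destruct (H2 x y eps) as [d2 Hd2].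
  exists (mkposreal _ (Rmin_pos _ _ (cond_pos d1) (cond_pos d2))). simpl. intros u v Hu Hv.
  assert (A1 := Hd1 u v (Rlt_le_trans _ _ _ Hu (Rmin_l _ _)) (Rlt_le_trans _ _ _ Hv (Rmin_l _ _))).
  assert (A2 := Hd2 u v (Rlt_le_trans _ _ _ Hu (Rmin_r _ _)) (Rlt_le_trans _ _ _ Hv (Rmin_r _ _))).
  simpl in *. apply Rabs_def2 in A1. apply Rabs_def2 in A2.
  unfold Rmin; destruct (Rle_dec (g1 (u,v)) (g2 (u,v))); destruct (Rle_dec (g1 (x,y)) (g2 (x,y)));
  apply Rabs_def1; lra.
Qed.

Lemma hcont_mfold (val : nat * nat -> pt -> R) l : (forall ab, hcont (val ab)) ->
  hcont (fun q => mfold (fun ab => val ab q) l).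
Proof.
  intros H. induction l as [|ab l IH]; unfold mfold; simpl.
  - apply H.
  - apply (hcont_min (val ab) (fun q => fold_right (fun ab0 acc => Rmin (val ab0 q) acc) (val (0%nat, 1%nat) q) l)); auto.
Qed.

Lemma hcont_dd p k : hcont (dd p k).
Proof.
  unfold dd. apply hcont_plus.
  - apply hcont_ext with (fun q => (fst q - fst (p k)) * (fst q - fst (p k))). intros; ring.
    apply hcont_mult; apply hcont_minus; auto using hcont_fst, hcont_const.
  - apply hcont_ext with (fun q => (snd q - snd (p k)) * (snd q - snd (p k))). intros; ring.
    apply hcont_mult; apply hcont_minus; auto using hcont_snd, hcont_const.
Qed.

Lemma hcont_minC n p : hcont (minC n p).
Proof.
  apply hcont_ext with (fun q => mfold (fun ab => pval (fun k => dd p k q) ab) (pairsC n)).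
  intros q; symmetry; apply minC_mfold.
  apply (hcont_mfold (fun ab q => pval (fun k => dd p k q) ab)).
  intros ab. unfold pval. apply hcont_mult. apply hcont_const. apply hcont_plus; apply hcont_dd.
Qed.

Lemma cont2_hcont g : continuous2 g -> hcont g.
Proof.
  intros Hg x y eps. destruct (Hg (x,y) eps (cond_pos eps)) as [del [Hd H]].
  assert (Hd2 : 0 < del / 2) by lra.
  exists (mkposreal _ Hd2). simpl. intros u v Hu Hv. apply (H (u,v)).
  unfold vnorm, vsub; simpl.
  apply Rabs_def2 in Hu. apply Rabs_def2 in Hv.
  rewrite <- (sqrt_pow2 del) by lra. apply sqrt_lt_1_alt. split.
  apply Rplus_le_le_0_compat; apply pow2_ge_0. 
  assert ((u - x)^2 < (del/2)^2). { apply Rsqr_lt_abs_1 in Hu || idtac. nra. }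
  assert ((v - y)^2 < (del/2)^2) by nra. nra.
Qed.

Definition pmove (p : nat -> pt) (i : nat) (e1 e2 t : R) : nat -> pt :=
  upd p i (vadd (p i) (t * e1, t * e2)).

Definition Delta (p : nat -> pt) i e1 e2 t q : R :=
  -2 * t * ((fst q - fst (p i)) * e1 + (snd q - snd (p i)) * e2) + t^2 * (e1^2 + e2^2).

Lemma dd_move p i e1 e2 t k q :
  dd (pmove p i e1 e2 t) k q = dd p k q + (if Nat.eqb k i then Delta p i e1 e2 t q else 0).
Proof.
  unfold dd, pmove, upd, Delta. destruct (Nat.eqb k i) eqn:E.
  - apply PeanoNat.Nat.eqb_eq in E. subst. unfold vadd; simpl. ring.
  - ring.
Qed.

Definition Box (R0 : R) (q : pt) : Prop := -R0 <= fst q <= R0 /\ -R0 <= snd q <= R0.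

Lemma Delta_bound p i e1 e2 t q R0 : Box R0 q -> Box R0 (p i) -> Rabs e1 <= 1 -> Rabs e2 <= 1 ->
  Rabs t <= 1 -> Rabs (Delta p i e1 e2 t q) <= (8 * R0 + 2) * Rabs t.
Proof.
  intros [Hq1 Hq2] [Hp1 Hp2] He1 He2 Ht. unfold Delta.
  set (A := (fst q - fst (p i)) * e1 + (snd q - snd (p i)) * e2).
  assert (HA : Rabs A <= 4 * R0).
  { unfold A. eapply Rle_trans. apply Rabs_triang. rewrite !Rabs_mult.
    assert (Rabs (fst q - fst (p i)) <= 2 * R0) by (apply Rabs_le; lra).
    assert (Rabs (snd q - snd (p i)) <= 2 * R0) by (apply Rabs_le; lra).
    generalize (Rabs_pos e1) (Rabs_pos e2) (Rabs_pos (fst q - fst (p i))) (Rabs_pos (snd q - snd (p i))).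
    nra. }
  assert (He : e1^2 + e2^2 <= 2).
  { apply Rabs_le_between in He1. apply Rabs_le_between in He2. nra. }
  assert (Ht2 : t^2 <= Rabs t).
  { rewrite <- (pow2_abs t). generalize (Rabs_pos t). nra. }
  eapply Rle_trans. apply Rabs_triang. rewrite !Rabs_mult.
  rewrite (Rabs_right (t^2)) by (apply Rle_ge, pow2_ge_0).
  rewrite (Rabs_right (e1^2 + e2^2)) by (apply Rle_ge, Rplus_le_le_0_compat; apply pow2_ge_0).
  replace (Rabs (-2)) with 2 by (rewrite Rabs_left by lra; ring).
  generalize (Rabs_pos t) (Rabs_pos A) (pow2_ge_0 t). nra.
Qed.

Lemma V2_iff Q n p i j q : V2 Q n p i j q <-> Q q /\ forall v w, (v = i \/ v = j) -> (w < n)%nat ->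
   w <> i -> w <> j -> dd p v q <= dd p w q.
Proof.
  unfold V2. split; intros [H1 H2]; split; auto; intros v w Hv Hw N1 N2; apply vnorm_le; auto.
Qed.

Definition dirv (p : nat -> pt) i e1 e2 (q : pt) : R :=
  (fst (p i) - fst q) * e1 + (snd (p i) - snd q) * e2.

Definition Dfun Q phi n p i e1 e2 (q : pt) : R :=
  sumG (others n i) (fun j => ind (V2 Q n p i j) q * (dirv p i e1 e2 q * phi q)).

Definition Err Q phi n p i e1 e2 t (q : pt) : R :=
  ind Q q * (minC n (pmove p i e1 e2 t) q * phi q) - ind Q q * (minC n p q * phi q)
  - t * Dfun Q phi n p i e1 e2 q.

Lemma Err_out Q phi n p i e1 e2 t q : ~ Q q -> Err Q phi n p i e1 e2 t q = 0.
Proof.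
  intros Hq. unfold Err, Dfun. rewrite ind_0 by auto.
  rewrite sumG_zero. ring. intros j _. rewrite ind_0. ring. intros [H _]; auto.
Qed.

Lemma Dfun_in Q phi n p i e1 e2 q b0 : Q q -> (i < n)%nat -> (b0 < n)%nat -> b0 <> i ->
  (forall w, (w < n)%nat -> w <> i -> w <> b0 -> dd p i q < dd p w q /\ dd p b0 q < dd p w q) ->
  Dfun Q phi n p i e1 e2 q = dirv p i e1 e2 q * phi q.
Proof.
  intros HQ Hi Hb N Top. unfold Dfun. rewrite (sumG_single _ _ b0).
  - rewrite ind_1. ring. apply V2_iff. split; auto. intros v w Hv Hw N1 N2.
    destruct (Top w Hw N1 N2). destruct Hv as [-> | ->]; lra.
  - apply others_nodup.
  - apply in_others; lia.
  - intros j Hj Nj. apply in_others in Hj. rewrite ind_0. ring.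
    intros HV. apply V2_iff in HV. destruct HV as [_ HV].
    specialize (HV j b0 (or_intror eq_refl) Hb ltac:(lia) ltac:(auto)).
    destruct (Top j ltac:(lia) ltac:(lia) Nj). lra.
Qed.

Lemma Dfun_out Q phi n p i e1 e2 q a0 b0 : (a0 < n)%nat -> (b0 < n)%nat -> a0 <> b0 -> i <> a0 -> i <> b0 ->
  (i < n)%nat ->
  (forall w, (w < n)%nat -> w <> a0 -> w <> b0 -> dd p a0 q < dd p w q /\ dd p b0 q < dd p w q) ->
  Dfun Q phi n p i e1 e2 q = 0.
Proof.
  intros Ha Hb N Na Nb Hi Top. unfold Dfun. apply sumG_zero. intros j Hj. apply in_others in Hj.
  rewrite ind_0. ring. intros HV. apply V2_iff in HV. destruct HV as [_ HV].
  destruct (PeanoNat.Nat.eq_dec j a0) as [->|Nj].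
  - specialize (HV i b0 (or_introl eq_refl) Hb ltac:(lia) ltac:(lia)).
    destruct (Top i Hi Na Nb). lra.
  - specialize (HV i a0 (or_introl eq_refl) Ha ltac:(lia) ltac:(lia)).
    destruct (Top i Hi Na Nb). lra.
Qed.

(* case A: q far from all bisectors *)
Lemma Err_caseA Q phi n p i e1 e2 t q del : (3 <= n)%nat -> (i < n)%nat -> Q q ->
  Rabs (Delta p i e1 e2 t q) <= del ->
  (forall a b, (a < b < n)%nat -> del < Rabs (dd p a q - dd p b q)) ->
  Rabs (Err Q phi n p i e1 e2 t q) <= Rabs (phi q) * (t^2 * (e1^2 + e2^2) / 2).
Proof.
  intros Hn Hi HQ HD Hgap.
  set (d := fun k => dd p k q).
  set (Dl := Delta p i e1 e2 t q) in *.
  assert (Hgap2 : forall u w, (u < n)%nat -> (w < n)%nat -> u <> w -> del < Rabs (d u - d w)).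
  { intros u w Hu Hw N. destruct (PeanoNat.Nat.lt_ge_cases u w).
    - apply Hgap; lia.
    - rewrite Rabs_minus_sym. apply Hgap; lia. }
  assert (Hdel : 0 <= del) by (eapply Rle_trans; [apply Rabs_pos|exact HD]).
  destruct (argmin (seq 0 n) d) as [a0 [Ha0 Hm0]].
  { destruct n; [lia|discriminate]. }
  apply in_seq in Ha0.
  destruct (argmin (others n a0) d) as [b0 [Hb0 Hm1]].
  { intro E. assert (In (if Nat.eqb a0 0 then 1 else 0)%nat (others n a0)).
    { apply in_others. destruct (Nat.eqb a0 0) eqn:Ea; [apply PeanoNat.Nat.eqb_eq in Ea|apply PeanoNat.Nat.eqb_neq in Ea]; lia. }
    rewrite E in H; auto. }
  apply in_others in Hb0.
  assert (Top : forall w, (w < n)%nat -> w <> a0 -> w <> b0 -> del < d w - d a0 /\ del < d w - d b0).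
  { intros w Hw N1 N2.
    assert (G1 : d a0 <= d w) by (apply Hm0; apply in_seq; lia).
    assert (G2 : d b0 <= d w) by (apply Hm1; apply in_others; lia).
    pose proof (Hgap2 a0 w ltac:(lia) Hw ltac:(auto)) as G3.
    pose proof (Hgap2 b0 w ltac:(lia) Hw ltac:(auto)) as G4.
    rewrite Rabs_left1 in G3 by lra. rewrite Rabs_left1 in G4 by lra. lra. }
  assert (M0 : minC n p q = / 2 * (d a0 + d b0)).
  { rewrite minC_mfold. apply mfold_top2; try lia.
    intros w Hw N1 N2. destruct (Top w Hw N1 N2). unfold d in *. split; lra. }
  set (d' := fun k => dd (pmove p i e1 e2 t) k q).
  assert (Ed' : forall k, d' k = d k + (if Nat.eqb k i then Dl else 0)) by (intros; apply dd_move).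
  assert (Mt : minC n (pmove p i e1 e2 t) q = / 2 * (d' a0 + d' b0)).
  { rewrite minC_mfold. apply mfold_top2; try lia.
    intros w Hw N1 N2. destruct (Top w Hw N1 N2) as [T1 T2]. rewrite !dd_move. fold Dl.
    apply Rabs_le_between in HD. unfold d in *.
    destruct (Nat.eqb a0 i) eqn:E1; destruct (Nat.eqb b0 i) eqn:E2; destruct (Nat.eqb w i) eqn:E3;
      try (apply PeanoNat.Nat.eqb_eq in E1); try (apply PeanoNat.Nat.eqb_eq in E2);
      try (apply PeanoNat.Nat.eqb_eq in E3); subst; try lia; split; lra. }
  assert (Top' : forall w, (w < n)%nat -> w <> a0 -> w <> b0 -> dd p a0 q < dd p w q /\ dd p b0 q < dd p w q).
  { intros w Hw N1 N2. destruct (Top w Hw N1 N2). unfold d in *. split; lra. }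
  unfold Err. rewrite ind_1 by auto. rewrite M0, Mt, !Ed'.
  assert (Hid : Dl = -2 * t * (- dirv p i e1 e2 q) + t^2 * (e1^2 + e2^2)) by (unfold Dl, Delta, dirv; ring).
  destruct (PeanoNat.Nat.eq_dec i a0) as [Ea|Na]; [|destruct (PeanoNat.Nat.eq_dec i b0) as [Eb|Nb]].
  - subst a0. rewrite (Dfun_in Q phi n p i e1 e2 q b0); auto; try lia.
    rewrite PeanoNat.Nat.eqb_refl. replace (Nat.eqb b0 i) with false by (symmetry; apply PeanoNat.Nat.eqb_neq; lia).
    rewrite Hid. match goal with |- Rabs ?L <= _ => replace L with (phi q * (t ^ 2 * (e1 ^ 2 + e2 ^ 2) / 2)) by (field) end.
    rewrite Rabs_mult. rewrite (Rabs_right (t ^ 2 * (e1 ^ 2 + e2 ^ 2) / 2)). lra.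
    apply Rle_ge. apply Rmult_le_pos; [|lra]. apply Rmult_le_pos. apply pow2_ge_0. apply Rplus_le_le_0_compat; apply pow2_ge_0.
  - subst b0. rewrite (Dfun_in Q phi n p i e1 e2 q a0); auto; try lia.
    2:{ intros w Hw N1 N2. destruct (Top' w Hw N2 N1). split; lra. }
    rewrite PeanoNat.Nat.eqb_refl. replace (Nat.eqb a0 i) with false by (symmetry; apply PeanoNat.Nat.eqb_neq; lia).
    rewrite Hid. match goal with |- Rabs ?L <= _ => replace L with (phi q * (t ^ 2 * (e1 ^ 2 + e2 ^ 2) / 2)) by (field) end.
    rewrite Rabs_mult. rewrite (Rabs_right (t ^ 2 * (e1 ^ 2 + e2 ^ 2) / 2)). lra.
    apply Rle_ge. apply Rmult_le_pos; [|lra]. apply Rmult_le_pos. apply pow2_ge_0. apply Rplus_le_le_0_compat; apply pow2_ge_0.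
  - rewrite (Dfun_out Q phi n p i e1 e2 q a0 b0); auto; try lia.
    replace (Nat.eqb a0 i) with false by (symmetry; apply PeanoNat.Nat.eqb_neq; lia).
    replace (Nat.eqb b0 i) with false by (symmetry; apply PeanoNat.Nat.eqb_neq; lia).
    replace (1 * (/ 2 * (d a0 + 0 + (d b0 + 0)) * phi q) - 1 * (/ 2 * (d a0 + d b0) * phi q) - t * 0) with 0 by ring.
    rewrite Rabs_R0. apply Rmult_le_pos. apply Rabs_pos.
    apply Rmult_le_pos; [|lra]. apply Rmult_le_pos. apply pow2_ge_0. apply Rplus_le_le_0_compat; apply pow2_ge_0.
Qed.

Lemma Err_caseB Q phi n p i e1 e2 t q R0 Mphi : (2 <= n)%nat -> Q q -> Box R0 q -> Box R0 (p i) ->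
  Rabs e1 <= 1 -> Rabs e2 <= 1 -> 0 <= R0 -> 0 <= Mphi ->
  (forall q', Q q' -> Rabs (phi q') <= Mphi) ->
  Rabs (Err Q phi n p i e1 e2 t q) <=
    Mphi * (Rabs (Delta p i e1 e2 t q) / 2) + Rabs t * (INR n * (4 * R0 * Mphi)).
Proof.
  intros Hn HQ Bq Bp He1 He2 HR0 HM Hphi.
  set (Dl := Delta p i e1 e2 t q).
  assert (Hm : Rabs (minC n (pmove p i e1 e2 t) q - minC n p q) <= Rabs Dl / 2).
  { rewrite !minC_mfold. apply mfold_lip.
    - intros [a b] Hab. apply in_pairsC in Hab. unfold pval; simpl. rewrite !dd_move. fold Dl.
      destruct (Nat.eqb a i) eqn:E1; destruct (Nat.eqb b i) eqn:E2;
      try (apply PeanoNat.Nat.eqb_eq in E1); try (apply PeanoNat.Nat.eqb_eq in E2); subst; try lia;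
      match goal with |- Rabs ?L <= _ => 
        first [ replace L with (Dl / 2) by field | replace L with 0 by field ] end;
      try (rewrite Rabs_R0; generalize (Rabs_pos Dl); lra);
      unfold Rdiv; rewrite Rabs_mult, (Rabs_right (/2)) by lra; lra.
    - unfold pval; simpl. rewrite !dd_move. fold Dl.
      destruct (Nat.eqb 0 i) eqn:E1; destruct (Nat.eqb 1 i) eqn:E2;
      try (apply PeanoNat.Nat.eqb_eq in E1); try (apply PeanoNat.Nat.eqb_eq in E2); subst; try lia;
      match goal with |- Rabs ?L <= _ => 
        first [ replace L with (Dl / 2) by field | replace L with 0 by field ] end;
      try (rewrite Rabs_R0; generalize (Rabs_pos Dl); lra);
      unfold Rdiv; rewrite Rabs_mult, (Rabs_right (/2)) by lra; lra. }
  assert (Hdir : Rabs (dirv p i e1 e2 q) <= 4 * R0).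
  { unfold dirv. destruct Bq as [Bq1 Bq2]. destruct Bp as [Bp1 Bp2].
    eapply Rle_trans. apply Rabs_triang. rewrite !Rabs_mult.
    assert (Rabs (fst (p i) - fst q) <= 2 * R0) by (apply Rabs_le; lra).
    assert (Rabs (snd (p i) - snd q) <= 2 * R0) by (apply Rabs_le; lra).
    assert (Rabs (fst (p i) - fst q) * Rabs e1 <= 2 * R0 * 1) by (apply Rmult_le_compat; auto using Rabs_pos).
    assert (Rabs (snd (p i) - snd q) * Rabs e2 <= 2 * R0 * 1) by (apply Rmult_le_compat; auto using Rabs_pos).
    lra. }
  assert (Hdf : Rabs (Dfun Q phi n p i e1 e2 q) <= INR n * (4 * R0 * Mphi)).
  { unfold Dfun. eapply Rle_trans. apply sumG_abs with (B := 4 * R0 * Mphi).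
    - intros j _. rewrite !Rabs_mult. pose proof (ind_01 (V2 Q n p i j) q).
      rewrite (Rabs_right (ind _ _)) by lra. specialize (Hphi q HQ).
      assert (X : Rabs (dirv p i e1 e2 q) * Rabs (phi q) <= 4 * R0 * Mphi) by (apply Rmult_le_compat; auto using Rabs_pos).
      assert (0 <= Rabs (dirv p i e1 e2 q) * Rabs (phi q)) by (apply Rmult_le_pos; apply Rabs_pos).
      nra.
    - apply Rmult_le_compat_r. nra. apply le_INR. apply others_length. }
  unfold Err. rewrite ind_1 by auto.
  replace (1 * (minC n (pmove p i e1 e2 t) q * phi q) - 1 * (minC n p q * phi q) - t * Dfun Q phi n p i e1 e2 q)
    with (phi q * (minC n (pmove p i e1 e2 t) q - minC n p q) - t * Dfun Q phi n p i e1 e2 q) by ring.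
  eapply Rle_trans. apply Rabs_triang. rewrite Rabs_Ropp, !Rabs_mult.
  specialize (Hphi q HQ).
  apply Rplus_le_compat.
  - apply Rmult_le_compat; auto using Rabs_pos.
  - apply Rmult_le_compat_l; auto using Rabs_pos.
Qed.

Definition strip (p : nat -> pt) (a b : nat) (del R0 : R) (q : pt) : Prop :=
  Box R0 q /\ Rabs (dd p a q - dd p b q) <= del.

Definition Bnd n p R0 Mphi K2 t (q : pt) : R :=
  Mphi * t^2 * ind (Box R0) q +
  K2 * Rabs t * sumG (pairsC n) (fun ab => ind (strip p (fst ab) (snd ab) ((8 * R0 + 2) * Rabs t) R0) q).

Lemma Err_bound Q phi n p i e1 e2 t R0 Mphi : (3 <= n)%nat -> (i < n)%nat ->
  (forall q, Q q -> Box R0 q) -> Q (p i) ->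
  Rabs e1 <= 1 -> Rabs e2 <= 1 -> 0 <= R0 -> 0 <= Mphi -> Rabs t <= 1 ->
  (forall q', Q q' -> Rabs (phi q') <= Mphi) ->
  forall q, Rabs (Err Q phi n p i e1 e2 t q) <= Bnd n p R0 Mphi (Mphi * ((8 * R0 + 2) + 4 * INR n * R0)) t q.
Proof.
  intros Hn Hi HB Hpi He1 He2 HR0 HM Ht Hphi q.
  set (c3 := 8 * R0 + 2).
  assert (Bpos : 0 <= Bnd n p R0 Mphi (Mphi * (c3 + 4 * INR n * R0)) t q).
  { unfold Bnd. apply Rplus_le_le_0_compat.
    - apply Rmult_le_pos. apply Rmult_le_pos; auto. apply pow2_ge_0. apply ind_01.
    - apply Rmult_le_pos. apply Rmult_le_pos. apply Rmult_le_pos; auto. unfold c3.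
      generalize (pos_INR n); nra. apply Rabs_pos.
      apply sumG_nonneg. intros; apply ind_01. }
  destruct (classic (Q q)) as [HQ|HQ].
  2:{ rewrite Err_out by auto. rewrite Rabs_R0. exact Bpos. }
  pose proof (Delta_bound p i e1 e2 t q R0 (HB q HQ) (HB _ Hpi) He1 He2 Ht) as HD. fold c3 in HD.
  destruct (classic (exists a b, (a < b < n)%nat /\ Rabs (dd p a q - dd p b q) <= c3 * Rabs t)) as [Hs|Hs].
  - destruct Hs as (a & b & Hab & Hs).
    eapply Rle_trans. apply (Err_caseB Q phi n p i e1 e2 t q R0 Mphi); auto; try lia.
    unfold Bnd. fold c3.
    assert (T : 1 <= sumG (pairsC n) (fun ab => ind (strip p (fst ab) (snd ab) (c3 * Rabs t) R0) q)).
    { replace 1 with (ind (strip p (fst (a,b)) (snd (a,b)) (c3 * Rabs t) R0) q).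
      apply (sumG_ge_term (pairsC n) (fun ab => ind (strip p (fst ab) (snd ab) (c3 * Rabs t) R0) q) (a,b)).
      apply in_pairsC; auto. intros; apply ind_01.
      apply ind_1. split; auto. }
    assert (T2 : 0 <= Mphi * t ^ 2 * ind (Box R0) q).
    { apply Rmult_le_pos. apply Rmult_le_pos; auto. apply pow2_ge_0. apply ind_01. }
    assert (T3 : 0 <= Mphi * (c3 + 4 * INR n * R0) * Rabs t).
    { apply Rmult_le_pos. apply Rmult_le_pos; auto. unfold c3.
      generalize (pos_INR n); nra. apply Rabs_pos. }
    assert (T4 : Mphi * (Rabs (Delta p i e1 e2 t q) / 2) + Rabs t * (INR n * (4 * R0 * Mphi)) <=
                 Mphi * (c3 + 4 * INR n * R0) * Rabs t).
    { assert (Mphi * (Rabs (Delta p i e1 e2 t q) / 2) <= Mphi * (c3 * Rabs t)).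
      { apply Rmult_le_compat_l; auto. generalize (Rabs_pos (Delta p i e1 e2 t q)) (Rabs_pos t). unfold c3 in *. nra. }
      generalize (Rabs_pos t) (pos_INR n). nra. }
    generalize (Rmult_le_compat_l _ _ _ T3 T). nra.
  - assert (Hg : forall a b, (a < b < n)%nat -> c3 * Rabs t < Rabs (dd p a q - dd p b q)).
    { intros a b Hab. apply Rnot_le_lt. intro Hc. apply Hs. exists a, b. auto. }
    eapply Rle_trans. apply (Err_caseA Q phi n p i e1 e2 t q (c3 * Rabs t)); auto.
    unfold Bnd. rewrite (ind_1 (Box R0)) by auto.
    assert (Rabs (phi q) * (t ^ 2 * (e1 ^ 2 + e2 ^ 2) / 2) <= Mphi * t^2 * 1).
    { assert (e1^2 + e2^2 <= 2) by (apply Rabs_le_between in He1; apply Rabs_le_between in He2; nra).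
      specialize (Hphi q HQ).
      assert (0 <= t ^ 2 * (e1 ^ 2 + e2 ^ 2) / 2 <= t^2) by (generalize (pow2_ge_0 t) (pow2_ge_0 e1) (pow2_ge_0 e2); nra).
      assert (Rabs (phi q) * (t ^ 2 * (e1 ^ 2 + e2 ^ 2) / 2) <= Mphi * t^2) by (apply Rmult_le_compat; auto using Rabs_pos; lra).
      lra. }
    assert (0 <= Mphi * (c3 + 4 * INR n * R0) * Rabs t *
      sumG (pairsC n) (fun ab => ind (strip p (fst ab) (snd ab) (c3 * Rabs t) R0) q)).
    { apply Rmult_le_pos. apply Rmult_le_pos. apply Rmult_le_pos; auto. unfold c3.
      generalize (pos_INR n); nra. apply Rabs_pos.
      apply sumG_nonneg. intros; apply ind_01. }
    fold c3. lra.
Qed.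

Lemma dd_affine p a b x1 y1 x2 y2 l :
  dd p a (l*x1 + (1-l)*x2, l*y1 + (1-l)*y2) - dd p b (l*x1 + (1-l)*x2, l*y1 + (1-l)*y2) =
  l * (dd p a (x1,y1) - dd p b (x1,y1)) + (1-l) * (dd p a (x2,y2) - dd p b (x2,y2)).
Proof. unfold dd; simpl. ring. Qed.

Lemma Box_convex R0 : convexS (Box R0).
Proof. intros x1 y1 x2 y2 l [H1 H2] [H3 H4] Hl. unfold Box in *; simpl in *. split; split; nra. Qed.

Lemma strip_convex p a b del R0 : convexS (strip p a b del R0).
Proof.
  intros x1 y1 x2 y2 l [B1 S1] [B2 S2] Hl. split. apply Box_convex; auto.
  rewrite dd_affine. eapply Rle_trans. apply Rabs_triang. rewrite !Rabs_mult.
  rewrite (Rabs_right l) by lra. rewrite (Rabs_right (1-l)) by lra. nra.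
Qed.

Lemma V2_convex Q n p i j : convexS Q -> convexS (V2 Q n p i j).
Proof.
  intros HQ x1 y1 x2 y2 l H1 H2 Hl. apply V2_iff in H1. apply V2_iff in H2. apply V2_iff.
  destruct H1 as [Q1 C1]. destruct H2 as [Q2 C2]. split. apply HQ; auto.
  intros v w Hv Hw N1 N2. specialize (C1 v w Hv Hw N1 N2). specialize (C2 v w Hv Hw N1 N2).
  assert (E := dd_affine p v w x1 y1 x2 y2 l). nra.
Qed.

Lemma Int2b_outer_le a b c d g I (B : R -> R) : Int2b a b c d g I ->
  (forall x, a <= x <= b -> RInt (fun y => g (x,y)) c d <= B x) -> ex_RInt B a b -> I <= RInt B a b.
Proof.
  intros (Hab & Hcd & Hs & Hi & Ho & HI) HB HBe. rewrite <- HI. apply RInt_le; auto.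
  intros x Hx. apply HB; lra.
Qed.

Lemma abs_div_le D k del : k <> 0 -> Rabs D <= del -> Rabs (D / (2 * k)) <= del / (2 * Rabs k).
Proof.
  intros Hk HD. assert (0 < Rabs k) by (apply Rabs_pos_lt; auto).
  unfold Rdiv. rewrite Rabs_mult, Rabs_inv, Rabs_mult, (Rabs_right 2) by lra.
  apply Rmult_le_compat_r; auto. left; apply Rinv_0_lt_compat; lra.
Qed.

Lemma strip_bound p a b R0 : 0 < R0 -> p a <> p b ->
  exists C, 0 <= C /\ forall del I, 0 <= del ->
    Int2b (-R0) R0 (-R0) R0 (fun q => ind (strip p a b del R0) q * 1) I -> I <= C * del.
Proof.
  intros HR Hne.
  set (ax := fst (p a)). set (ay := snd (p a)). set (bx := fst (p b)). set (by' := snd (p b)).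
  assert (ED : forall x y, dd p a (x,y) - dd p b (x,y) =
     2 * (by' - ay) * y + (2 * x * (bx - ax) + ax^2 - bx^2 + ay^2 - by'^2)).
  { intros. unfold dd, ax, ay, bx, by'; simpl. ring. }
  destruct (Req_dec (by' - ay) 0) as [Hy0|Hy0].
  - (* vertical bisector: constraint on x only *)
    assert (Hx0 : bx - ax <> 0).
    { intro Hx. apply Hne. unfold ax, ay, bx, by' in *. apply injective_projections; lra. }
    set (nx := bx - ax) in *.
    exists ((2 * R0) * / Rabs nx). split.
    { apply Rmult_le_pos. lra. left. apply Rinv_0_lt_compat. apply Rabs_pos_lt; auto. }
    intros del I Hdel HI.
    set (w := del / (2 * Rabs nx)). set (x0 := - (ax^2 - bx^2 + ay^2 - by'^2) / (2 * nx)).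
    assert (Hw : 0 <= w) by (unfold w; apply Rdiv_le_0_compat; auto; apply Rmult_lt_0_compat; [lra|apply Rabs_pos_lt; auto]).
    assert (Hpt : forall x y, ind (strip p a b del R0) (x,y) * 1 <= ind1 (x0 - w) (x0 + w) x).
    { intros x y. destruct (classic (strip p a b del R0 (x,y))) as [Hs|Hs].
      - rewrite ind_1 by auto. destruct Hs as [_ Hs]. rewrite ED in Hs.
        rewrite Hy0 in Hs.
        assert (Hx : Rabs (x - x0) <= w).
        { unfold x0, w. replace (x - - (ax ^ 2 - bx ^ 2 + ay ^ 2 - by' ^ 2) / (2 * nx)) with
            ((2 * 0 * y + (2 * x * nx + ax ^ 2 - bx ^ 2 + ay ^ 2 - by' ^ 2)) / (2 * nx)) by (field; auto).
          apply abs_div_le; auto. }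
        apply Rabs_le_between in Hx. unfold ind1. dec_all; lra.
      - rewrite ind_0 by auto. unfold ind1. dec_all; lra. }
    eapply Rle_trans. apply (Int2b_outer_le _ _ _ _ _ _ (fun x => (2 * R0) * ind1 (x0 - w) (x0 + w) x) HI).
    + intros x Hx. eapply Rle_trans. apply RInt_le with (g := fun _ => ind1 (x0 - w) (x0 + w) x).
      lra. apply HI; auto. apply ex_RInt_const. intros y _. apply Hpt.
      rewrite RInt_const0. apply Req_le. ring.
    + apply (ex_RInt_scal (ind1 (x0 - w) (x0 + w))). apply ind1_int; lra.
    + rewrite (RInt_scal (ind1 (x0 - w) (x0 + w))) by (apply ind1_int; lra).
      destruct (ind1_int (-R0) R0 (x0 - w) (x0 + w)) as [_ Hb]; try lra.
      unfold scal; simpl; unfold mult; simpl.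
      assert (2 * R0 * RInt (ind1 (x0 - w) (x0 + w)) (- R0) R0 <= 2 * R0 * (2 * w)) by (apply Rmult_le_compat_l; lra).
      assert (E : 2 * R0 * / Rabs nx * del = 2 * R0 * (2 * w)).
      { unfold w. field. apply Rabs_no_R0; auto. }
      lra.
  - set (ny := by' - ay) in *.
    exists ((2 * R0) * / Rabs ny). split.
    { apply Rmult_le_pos. lra. left. apply Rinv_0_lt_compat. apply Rabs_pos_lt; auto. }
    intros del I Hdel HI.
    set (w := del / (2 * Rabs ny)).
    assert (Hw : 0 <= w) by (unfold w; apply Rdiv_le_0_compat; auto; apply Rmult_lt_0_compat; [lra|apply Rabs_pos_lt; auto]).
    assert (Hpt : forall x y, ind (strip p a b del R0) (x,y) * 1 <=
        ind1 (- (2 * x * (bx - ax) + ax^2 - bx^2 + ay^2 - by'^2) / (2 * ny) - w)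
             (- (2 * x * (bx - ax) + ax^2 - bx^2 + ay^2 - by'^2) / (2 * ny) + w) y).
    { intros x y. set (y0 := - (2 * x * (bx - ax) + ax^2 - bx^2 + ay^2 - by'^2) / (2 * ny)).
      destruct (classic (strip p a b del R0 (x,y))) as [Hs|Hs].
      - rewrite ind_1 by auto. destruct Hs as [_ Hs]. rewrite ED in Hs.
        assert (Hx : Rabs (y - y0) <= w).
        { unfold y0, w. replace (y - - (2 * x * (bx - ax) + ax ^ 2 - bx ^ 2 + ay ^ 2 - by' ^ 2) / (2 * ny)) with
            ((2 * ny * y + (2 * x * (bx - ax) + ax ^ 2 - bx ^ 2 + ay ^ 2 - by' ^ 2)) / (2 * ny)) by (field; auto).
          apply abs_div_le; auto. }
        apply Rabs_le_between in Hx. unfold ind1. dec_all; lra.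
      - rewrite ind_0 by auto. unfold ind1. dec_all; lra. }
    eapply Rle_trans. apply (Int2b_outer_le _ _ _ _ _ _ (fun x => 2 * w) HI).
    + intros x Hx. eapply Rle_trans. apply RInt_le with
        (g := ind1 (- (2 * x * (bx - ax) + ax^2 - bx^2 + ay^2 - by'^2) / (2 * ny) - w)
             (- (2 * x * (bx - ax) + ax^2 - bx^2 + ay^2 - by'^2) / (2 * ny) + w)).
      lra. apply HI; auto. apply ind1_int; lra. intros y _. apply Hpt.
      match goal with |- RInt (ind1 ?s ?t) _ _ <= _ =>
        destruct (ind1_int (-R0) R0 s t) as [_ Hb]; lra end.
    + apply ex_RInt_const.
    + rewrite RInt_const0. apply Req_le. unfold w. field. apply Rabs_no_R0; auto.
Qed.

Lemma strips_int p R0 (l : list (nat * nat)) : 0 < R0 ->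
  (forall ab, In ab l -> p (fst ab) <> p (snd ab)) ->
  exists Cs, 0 <= Cs /\ forall del, 0 <= del -> exists Is,
    Int2b (-R0) R0 (-R0) R0 (fun q => sumG l (fun ab => ind (strip p (fst ab) (snd ab) del R0) q)) Is /\
    Is <= Cs * del.
Proof.
  intros HR. induction l as [|[a b] l IH]; intros Hl.
  - exists 0. split; [lra|]. intros del Hd. exists 0. split.
    + apply Int2b_ext with (fun _ => 0). intros; reflexivity. apply Int2b_zero; lra.
    + lra.
  - destruct IH as [Cs [HCs HI]]. intros ab Hab; apply Hl; right; auto.
    destruct (strip_bound p a b R0 HR (Hl (a,b) (or_introl eq_refl))) as [C [HC HCb]].
    exists (C + Cs). split; [lra|]. intros del Hd.
    destruct (HI del Hd) as [Is [HIs HIs']].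
    destruct (int_convex (strip p a b del R0) (fun _ => 1) (-R0) R0 (-R0) R0) as [I1 HI1]; try lra.
    { apply strip_convex. }
    { intros x y [[H1 H2] _]. simpl in *. auto. }
    { apply hcont_const. }
    exists (I1 + 1 * Is). split.
    + apply Int2b_ext with (fun q => ind (strip p a b del R0) q * 1 + 1 * sumG l (fun ab => ind (strip p (fst ab) (snd ab) del R0) q)).
      intros q; simpl; ring.
      apply Int2b_lin; auto.
    + specialize (HCb del I1 Hd HI1). lra.
Qed.

Lemma box_int R0 : 0 < R0 -> exists Ib, Int2b (-R0) R0 (-R0) R0 (fun q => ind (Box R0) q * 1) Ib /\ Ib <= (2 * R0) * (2 * R0).
Proof.
  intros HR.
  destruct (int_convex (Box R0) (fun _ => 1) (-R0) R0 (-R0) R0) as [I1 HI1]; try lra.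
  apply Box_convex. intros x y H; exact H. apply hcont_const.
  exists I1. split; auto.
  eapply Rle_trans. apply (Int2b_outer_le _ _ _ _ _ _ (fun _ => 2 * R0) HI1).
  - intros x Hx. eapply Rle_trans. apply RInt_le with (g := fun _ => 1). lra. apply HI1; auto.
    apply ex_RInt_const. intros y _. generalize (ind_01 (Box R0) (x,y)). lra.
    rewrite RInt_const0. lra.
  - apply ex_RInt_const.
  - rewrite RInt_const0. lra.
Qed.

Lemma pmove0 p i e1 e2 : pmove p i e1 e2 0 = p.
Proof.
  apply functional_extensionality. intros k. unfold pmove, upd.
  destruct (Nat.eqb k i) eqn:E; auto. apply PeanoNat.Nat.eqb_eq in E. subst.
  unfold vadd. destruct (p i); simpl. f_equal; ring.
Qed.

Definition MX Q phi n p i j := integral_on (V2 Q n p i j) (fun q => fst q * phi q).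
Definition MY Q phi n p i j := integral_on (V2 Q n p i j) (fun q => snd q * phi q).

Lemma sum_lin3 (l : list nat) (M X Y : nat -> R) (e1 e2 px py : R) :
  sumG l (fun j => (e1 * px + e2 * py) * M j + (- e1) * X j + (- e2) * Y j) =
  e1 * sumG l (fun j => M j * px - X j) + e2 * sumG l (fun j => M j * py - Y j).
Proof. induction l as [|x l IH]; simpl; [ring|]. rewrite IH. ring. Qed.

Lemma deriv_main Q phi n p i e1 e2 : is_convex_polygon Q -> C2_2 phi ->
  (3 <= n)%nat -> (forall k, (k < n)%nat -> Q (p k)) ->
  (forall k l, (k < n)%nat -> (l < n)%nat -> k <> l -> p k <> p l) -> (i < n)%nat ->
  Rabs e1 <= 1 -> Rabs e2 <= 1 ->
  derivable_pt_lim (fun t => H Q phi n (pmove p i e1 e2 t)) 0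
    (e1 * sumR (others n i) (fun j => mass Q phi n p i j * fst (p i) - MX Q phi n p i j) +
     e2 * sumR (others n i) (fun j => mass Q phi n p i j * snd (p i) - MY Q phi n p i j)).
Proof.
  intros HQp HC2 Hn Hp Hd Hi He1 He2.
  destruct (polygon_facts Q HQp) as [HQc [R0 [HR0 HQb]]].
  assert (HB : forall q, Q q -> Box R0 q) by (intros q Hq; apply HQb; auto).
  assert (hphi : hcont phi).
  { destruct HC2 as (gx & gy & _ & _ & Hc & _). apply cont2_hcont; auto. }
  destruct (cont_bound (fun u v => phi (u,v)) (-R0) R0 (-R0) R0 hphi) as [Mphi [HM0 HM]].
  assert (HMQ : forall q, Q q -> Rabs (phi q) <= Mphi).
  { intros [x y] Hq. destruct (HB _ Hq). apply HM; auto. }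
  assert (HQsupp : forall x y, Q (x,y) -> -R0 <= x <= R0 /\ -R0 <= y <= R0).
  { intros x y Hq. apply (HB _ Hq). }
  assert (IH : forall p', Int2b (-R0) R0 (-R0) R0 (fun q => ind Q q * (minC n p' q * phi q)) (H Q phi n p')).
  { intros p'. destruct (int_convex Q (fun q => minC n p' q * phi q) (-R0) R0 (-R0) R0) as [I HI]; try lra; auto.
    apply hcont_mult; auto. apply hcont_minC.
    unfold H, integral_on. rewrite (integral2_Int2b _ _ _ _ _ _ HI). exact HI. }
  assert (IV : forall j (g : pt -> R), hcont g ->
     Int2b (-R0) R0 (-R0) R0 (fun q => ind (V2 Q n p i j) q * g q) (integral_on (V2 Q n p i j) g)).
  { intros j g hg. destruct (int_convex (V2 Q n p i j) g (-R0) R0 (-R0) R0) as [I HI]; try lra; auto.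
    apply V2_convex; auto. intros x y Hv. apply HQsupp. apply Hv.
    unfold integral_on. rewrite (integral2_Int2b _ _ _ _ _ _ HI). exact HI. }
  set (Gd := e1 * sumR (others n i) (fun j => mass Q phi n p i j * fst (p i) - MX Q phi n p i j) +
     e2 * sumR (others n i) (fun j => mass Q phi n p i j * snd (p i) - MY Q phi n p i j)).
  assert (ID : Int2b (-R0) R0 (-R0) R0 (Dfun Q phi n p i e1 e2) Gd).
  { unfold Dfun, Gd. rewrite !sumR_G. rewrite <- sum_lin3.
    apply Int2b_sum; try lra. intros j _.
    apply Int2b_ext with (fun q => (ind (V2 Q n p i j) q * phi q * (e1 * fst (p i) + e2 * snd (p i)) +
       (- e1) * (ind (V2 Q n p i j) q * (fst q * phi q))) + (- e2) * (ind (V2 Q n p i j) q * (snd q * phi q))).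
    { intros q. unfold dirv. ring. }
    replace ((e1 * fst (p i) + e2 * snd (p i)) * mass Q phi n p i j + - e1 * MX Q phi n p i j + - e2 * MY Q phi n p i j)
      with ((mass Q phi n p i j * (e1 * fst (p i) + e2 * snd (p i)) + - e1 * MX Q phi n p i j) + - e2 * MY Q phi n p i j) by ring.
    apply Int2b_lin; [apply Int2b_lin|].
    - apply Int2b_ext with (fun q => 0 + (e1 * fst (p i) + e2 * snd (p i)) * (ind (V2 Q n p i j) q * phi q)).
      intros; ring. replace (mass Q phi n p i j * (e1 * fst (p i) + e2 * snd (p i))) with
        (0 + (e1 * fst (p i) + e2 * snd (p i)) * mass Q phi n p i j) by ring.
      apply Int2b_lin. apply Int2b_zero; lra. apply IV; auto.
    - apply IV. apply hcont_mult; auto using hcont_fst.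
    - apply IV. apply hcont_mult; auto using hcont_snd. }
  assert (IE : forall t, Int2b (-R0) R0 (-R0) R0 (Err Q phi n p i e1 e2 t)
      (H Q phi n (pmove p i e1 e2 t) - H Q phi n p - t * Gd)).
  { intros t. apply Int2b_ext with (fun q =>
      (ind Q q * (minC n (pmove p i e1 e2 t) q * phi q) + (-1) * (ind Q q * (minC n p q * phi q)))
      + (-t) * Dfun Q phi n p i e1 e2 q).
    { intros q. unfold Err. ring. }
    replace (H Q phi n (pmove p i e1 e2 t) - H Q phi n p - t * Gd) with
      ((H Q phi n (pmove p i e1 e2 t) + (-1) * H Q phi n p) + (-t) * Gd) by ring.
    apply Int2b_lin; auto. apply Int2b_lin; auto. }
  assert (Hdist : forall ab, In ab (pairsC n) -> p (fst ab) <> p (snd ab)).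
  { intros [a b] Hab. apply in_pairsC in Hab. simpl. apply Hd; lia. }
  destruct (strips_int p R0 (pairsC n) HR0 Hdist) as [Cs [HCs HIs]].
  destruct (box_int R0 HR0) as [Ib [HIb HIb']].
  set (c3 := 8 * R0 + 2).
  set (K2 := Mphi * ((8 * R0 + 2) + 4 * INR n * R0)).
  assert (HK2 : 0 <= K2) by (unfold K2; apply Rmult_le_pos; auto; generalize (pos_INR n); intros; assert (0 <= INR n * R0) by (apply Rmult_le_pos; lra); lra).
  set (K := Mphi * ((2 * R0) * (2 * R0)) + K2 * Cs * c3).
  assert (HK : 0 <= K).
  { unfold K, c3. apply Rplus_le_le_0_compat. apply Rmult_le_pos; nra. apply Rmult_le_pos; [apply Rmult_le_pos|]; lra. }
  assert (Key : forall t, Rabs t <= 1 ->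
     Rabs (H Q phi n (pmove p i e1 e2 t) - H Q phi n p - t * Gd) <= K * t^2).
  { intros t Ht.
    assert (Hdel : 0 <= c3 * Rabs t) by (unfold c3; generalize (Rabs_pos t); nra).
    destruct (HIs (c3 * Rabs t) Hdel) as [Is [HIs1 HIs2]].
    assert (IBd : Int2b (-R0) R0 (-R0) R0 (Bnd n p R0 Mphi K2 t)
       (0 + (Mphi * t^2) * Ib + (K2 * Rabs t) * Is)).
    { apply Int2b_ext with (fun q => (0 + (Mphi * t^2) * (ind (Box R0) q * 1)) + (K2 * Rabs t) *
          sumG (pairsC n) (fun ab => ind (strip p (fst ab) (snd ab) (c3 * Rabs t) R0) q)).
      { intros q. unfold Bnd. fold c3. ring. }
      apply Int2b_lin; auto. apply Int2b_lin; auto. apply Int2b_zero; lra. }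
    assert (Pt : forall q, Rabs (Err Q phi n p i e1 e2 t q) <= Bnd n p R0 Mphi K2 t q).
    { intros q. apply Err_bound; auto; lra. }
    assert (U : H Q phi n (pmove p i e1 e2 t) - H Q phi n p - t * Gd <= 0 + Mphi * t ^ 2 * Ib + K2 * Rabs t * Is).
    { apply (Int2b_le _ _ _ _ _ _ _ _ (IE t) IBd). intros q. specialize (Pt q). apply Rabs_le_between in Pt. lra. }
    assert (IBd' : Int2b (-R0) R0 (-R0) R0 (fun q => 0 + (-1) * Bnd n p R0 Mphi K2 t q)
       (0 + (-1) * (0 + (Mphi * t^2) * Ib + (K2 * Rabs t) * Is))).
    { apply Int2b_lin; auto. apply Int2b_zero; lra. }
    assert (L : 0 + (-1) * (0 + (Mphi * t^2) * Ib + (K2 * Rabs t) * Is) <= H Q phi n (pmove p i e1 e2 t) - H Q phi n p - t * Gd).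
    { apply (Int2b_le _ _ _ _ _ _ _ _ IBd' (IE t)). intros q. specialize (Pt q). apply Rabs_le_between in Pt. lra. }
    assert (Bv : 0 + Mphi * t ^ 2 * Ib + K2 * Rabs t * Is <= K * t^2).
    { assert (Mphi * t ^ 2 * Ib <= Mphi * t^2 * ((2 * R0) * (2 * R0))).
      { apply Rmult_le_compat_l; auto. apply Rmult_le_pos; auto. apply pow2_ge_0. }
      assert (K2 * Rabs t * Is <= K2 * Rabs t * (Cs * (c3 * Rabs t))).
      { apply Rmult_le_compat_l; auto. apply Rmult_le_pos; auto. apply Rabs_pos. }
      assert (Tt : Rabs t * Rabs t = t^2) by (rewrite <- Rabs_mult; rewrite Rabs_right; [ring|]; apply Rle_ge; nra).
      assert (E2 : K2 * Rabs t * (Cs * (c3 * Rabs t)) = K2 * Cs * c3 * t^2) by (rewrite <- Tt; ring).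
      assert (E1 : K * t^2 = Mphi * t ^ 2 * ((2 * R0) * (2 * R0)) + K2 * Cs * c3 * t^2) by (unfold K; ring).
      lra. }
    apply Rabs_le. lra. }
  intros eps Heps.
  assert (Hd0 : 0 < Rmin 1 (eps / (K + 1))) by (apply Rmin_pos; [lra|apply Rdiv_lt_0_compat; lra]).
  exists (mkposreal _ Hd0). simpl. intros h Hh0 Hh.
  rewrite Rplus_0_l, pmove0.
  assert (Hh1 : Rabs h <= 1) by (left; eapply Rlt_le_trans; [exact Hh|apply Rmin_l]).
  assert (Hh2 : Rabs h < eps / (K + 1)) by (eapply Rlt_le_trans; [exact Hh|apply Rmin_r]).
  specialize (Key h Hh1). fold Gd.
  replace ((H Q phi n (pmove p i e1 e2 h) - H Q phi n p) / h - Gd) with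
    ((H Q phi n (pmove p i e1 e2 h) - H Q phi n p - h * Gd) / h) by (field; auto).
  unfold Rdiv. rewrite Rabs_mult, Rabs_inv.
  assert (Ha : 0 < Rabs h) by (apply Rabs_pos_lt; auto).
  apply Rmult_lt_reg_r with (Rabs h); auto. rewrite Rmult_assoc, Rinv_l by lra. rewrite Rmult_1_r.
  assert (Rabs h * Rabs h = h^2) by (rewrite <- Rabs_mult; rewrite Rabs_right; [ring|]; apply Rle_ge; nra).
  assert (K * Rabs h < eps).
  { apply Rle_lt_trans with ((K + 1) * Rabs h). nra.
    apply Rmult_lt_reg_r with (/ (K+1)). apply Rinv_0_lt_compat; lra.
    replace ((K + 1) * Rabs h * / (K + 1)) with (Rabs h) by (field; lra). exact Hh2. }
  nra.
Qed.

Lemma moment_zero Q phi n p i j : is_convex_polygon Q -> C2_2 phi -> (forall q, Q q -> 0 <= phi q) ->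
  mass Q phi n p i j = 0 -> MX Q phi n p i j = 0 /\ MY Q phi n p i j = 0.
Proof.
  intros HQp HC2 Hpos Hm.
  destruct (polygon_facts Q HQp) as [HQc [R0 [HR0 HQb]]].
  assert (hphi : hcont phi).
  { destruct HC2 as (gx & gy & _ & _ & Hc & _). apply cont2_hcont; auto. }
  assert (IV : forall (g : pt -> R), hcont g ->
     Int2b (-R0) R0 (-R0) R0 (fun q => ind (V2 Q n p i j) q * g q) (integral_on (V2 Q n p i j) g)).
  { intros g hg. destruct (int_convex (V2 Q n p i j) g (-R0) R0 (-R0) R0) as [I HI]; try lra; auto.
    apply V2_convex; auto. intros x y Hv. apply (HQb (x,y)). apply Hv.
    unfold integral_on. rewrite (integral2_Int2b _ _ _ _ _ _ HI). exact HI. }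
  assert (IM : forall c, Int2b (-R0) R0 (-R0) R0 (fun q => 0 + c * (ind (V2 Q n p i j) q * phi q)) (0 + c * 0)).
  { intros c. apply Int2b_lin. apply Int2b_zero; lra. rewrite <- Hm. apply IV; auto. }
  assert (Gen : forall (g : pt -> R), hcont g -> (forall q, Q q -> Rabs (g q) <= R0 * phi q) ->
     integral_on (V2 Q n p i j) g = 0).
  { intros g hg Hb. apply Rle_antisym.
    - replace 0 with (0 + R0 * 0) by ring.
      apply (Int2b_le _ _ _ _ _ _ _ _ (IV g hg) (IM R0)). intros q.
      destruct (classic (V2 Q n p i j q)) as [Hv|Hv].
      + rewrite ind_1 by auto. specialize (Hb q (proj1 Hv)). apply Rabs_le_between in Hb. lra.
      + rewrite ind_0 by auto. lra.
    - replace 0 with (0 + (- R0) * 0) by ring.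
      apply (Int2b_le _ _ _ _ _ _ _ _ (IM (-R0)) (IV g hg)). intros q.
      destruct (classic (V2 Q n p i j q)) as [Hv|Hv].
      + rewrite ind_1 by auto. specialize (Hb q (proj1 Hv)). apply Rabs_le_between in Hb. lra.
      + rewrite ind_0 by auto. lra. }
  split.
  - apply Gen. apply hcont_mult; auto using hcont_fst.
    intros q Hq. rewrite Rabs_mult, (Rabs_right (phi q)) by (apply Rle_ge; auto).
    apply Rmult_le_compat_r; auto. specialize (HQb q Hq). apply Rabs_le; lra.
  - apply Gen. apply hcont_mult; auto using hcont_snd.
    intros q Hq. rewrite Rabs_mult, (Rabs_right (phi q)) by (apply Rle_ge; auto).
    apply Rmult_le_compat_r; auto. specialize (HQb q Hq). apply Rabs_le; lra.
Qed.

Lemma sumV_fst l F : fst (sumV l F) = sumR l (fun j => fst (F j)).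
Proof. induction l as [|x l IH]; simpl; auto. rewrite <- IH. reflexivity. Qed.
Lemma sumV_snd l F : snd (sumV l F) = sumR l (fun j => snd (F j)).
Proof. induction l as [|x l IH]; simpl; auto. rewrite <- IH. reflexivity. Qed.

Lemma sumR_ext l F1 F2 : (forall j, In j l -> F1 j = F2 j) -> sumR l F1 = sumR l F2.
Proof. apply sumG_ext. Qed.

Lemma sumR_distr l (m c : nat -> R) x : sumR l (fun j => m j * (c j - x)) = sumR l (fun j => m j * c j) - sumR l m * x.
Proof. induction l as [|a l IH]; simpl; [ring|]. rewrite IH. ring. Qed.

Lemma sumR_neg l (F : nat -> R) : - sumR l F = sumR l (fun j => - F j).
Proof. induction l as [|a l IH]; simpl; [ring|]. rewrite <- IH. ring. Qed.

Lemma fstG (l : list nat) (m : nat -> R) (C : nat -> pt) (pi : pt) :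
  fst (vopp (sumV l (fun j => vscal (m j) (vsub (C j) pi)))) = sumR l (fun j => - (m j * (fst (C j) - fst pi))).
Proof.
  induction l as [|a l IH]; simpl; unfold vopp, vscal, vadd, vsub in *; simpl in *; [ring|].
  rewrite <- IH. ring.
Qed.
Lemma sndG (l : list nat) (m : nat -> R) (C : nat -> pt) (pi : pt) :
  snd (vopp (sumV l (fun j => vscal (m j) (vsub (C j) pi)))) = sumR l (fun j => - (m j * (snd (C j) - snd pi))).
Proof.
  induction l as [|a l IH]; simpl; unfold vopp, vscal, vadd, vsub in *; simpl in *; [ring|].
  rewrite <- IH. ring.
Qed.

Lemma sumR_E (l : list nat) (m c : nat -> R) (x : R) :
  sumR l (fun j => - (m j * (c j - x))) = - (sumR l (fun j => m j * c j) - sumR l m * x).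
Proof. induction l as [|a l IH]; simpl; [ring|]. rewrite IH. ring. Qed.

Theorem mainTheorem4 (Q : pt -> Prop) (phi : pt -> R) (n : nat) (p : nat -> pt) (i : nat) :
  is_convex_polygon Q ->
  C2_2 phi ->
  (forall q, Q q -> 0 <= phi q) ->
  (3 <= n)%nat ->
  (forall k, (k < n)%nat -> Q (p k)) ->
  (forall k l, (k < n)%nat -> (l < n)%nat -> k <> l -> p k <> p l) ->
  (i < n)%nat ->
  0 < massW Q phi n p i ->
  let G := vopp (sumV (others n i)
             (fun j => vscal (mass Q phi n p i j) (vsub (centroid Q phi n p i j) (p i)))) in
  derivable_pt_lim (fun t => H Q phi n (upd p i (vadd (p i) (t, 0)))) 0 (fst G) /\
  derivable_pt_lim (fun t => H Q phi n (upd p i (vadd (p i) (0, t)))) 0 (snd G) /\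
  G = vopp (vscal (massW Q phi n p i) (vsub (centroidW Q phi n p i) (p i))).
Proof.
  intros HQp HC2 Hpos Hn Hp Hd Hi HmW G.
  set (Sx := sumR (others n i) (fun j => mass Q phi n p i j * fst (p i) - MX Q phi n p i j)).
  set (Sy := sumR (others n i) (fun j => mass Q phi n p i j * snd (p i) - MY Q phi n p i j)).
  assert (Mom : forall j, mass Q phi n p i j * (/ mass Q phi n p i j * MX Q phi n p i j) = MX Q phi n p i j /\
                          mass Q phi n p i j * (/ mass Q phi n p i j * MY Q phi n p i j) = MY Q phi n p i j).
  { intros j. destruct (Req_dec (mass Q phi n p i j) 0) as [Z|Z].
    - destruct (moment_zero Q phi n p i j HQp HC2 Hpos Z) as [A B]. rewrite Z, A, B. split; ring.
    - split; field; auto. }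
  assert (Gx : fst G = Sx).
  { unfold G. rewrite (fstG (others n i) (fun j => mass Q phi n p i j) (fun j => centroid Q phi n p i j)).
    unfold Sx. apply sumR_ext. intros j _. unfold centroid, vscal; simpl.
    fold (MX Q phi n p i j). destruct (Mom j) as [A _].
    replace (- (mass Q phi n p i j * (/ mass Q phi n p i j * MX Q phi n p i j - fst (p i)))) with
      (mass Q phi n p i j * fst (p i) - mass Q phi n p i j * (/ mass Q phi n p i j * MX Q phi n p i j)) by ring.
    rewrite A. ring. }
  assert (Gy : snd G = Sy).
  { unfold G. rewrite (sndG (others n i) (fun j => mass Q phi n p i j) (fun j => centroid Q phi n p i j)).
    unfold Sy. apply sumR_ext. intros j _. unfold centroid, vscal; simpl.
    fold (MY Q phi n p i j). destruct (Mom j) as [_ B].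
    replace (- (mass Q phi n p i j * (/ mass Q phi n p i j * MY Q phi n p i j - snd (p i)))) with
      (mass Q phi n p i j * snd (p i) - mass Q phi n p i j * (/ mass Q phi n p i j * MY Q phi n p i j)) by ring.
    rewrite B. ring. }
  assert (He1 : Rabs 1 <= 1) by (rewrite Rabs_R1; lra).
  assert (He0 : Rabs 0 <= 1) by (rewrite Rabs_R0; lra).
  split; [|split].
  - rewrite Gx. replace Sx with (1 * Sx + 0 * Sy) by ring.
    replace (fun t => H Q phi n (upd p i (vadd (p i) (t, 0)))) with (fun t => H Q phi n (pmove p i 1 0 t)).
    apply deriv_main; auto.
    apply functional_extensionality. intros t. unfold pmove. do 4 f_equal; ring.
  - rewrite Gy. replace Sy with (0 * Sx + 1 * Sy) by ring.
    replace (fun t => H Q phi n (upd p i (vadd (p i) (0, t)))) with (fun t => H Q phi n (pmove p i 0 1 t)).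
    apply deriv_main; auto.
    apply functional_extensionality. intros t. unfold pmove. do 4 f_equal; ring.
  - unfold G. apply injective_projections.
    + rewrite (fstG (others n i) (fun j => mass Q phi n p i j) (fun j => centroid Q phi n p i j)).
      unfold centroidW, vopp, vscal, vsub. cbn [fst snd]. rewrite sumV_fst. cbn [fst snd].
      rewrite sumR_E. change (sumR (others n i) (mass Q phi n p i)) with (massW Q phi n p i). field. lra.
    + rewrite (sndG (others n i) (fun j => mass Q phi n p i j) (fun j => centroid Q phi n p i j)).
      unfold centroidW, vopp, vscal, vsub. cbn [fst snd]. rewrite sumV_snd. cbn [fst snd].
      rewrite sumR_E. change (sumR (others n i) (mass Q phi n p i)) with (massW Q phi n p i). field. lra.
Qed.
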